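(* Let $A$ be a ring and $\mathfrak{C}$ a Frobenius $A$-coring, with coproduct $\Delta$. Put $\mathfrak{C}^0=A$ and $\mathfrak{C}^k=\mathfrak{C}^{\otimes_A k}$ for $k=1,2,\ldots$. Then there exist ring structures on all $\mathfrak{C}^k$ (the one on $\mathfrak{C}^0$ being that of $A$) and a sequence of ring homomorphisms $$\mathfrak{C}^0\xrightarrow{\Theta}\mathfrak{C}^1\xrightarrow{\Delta}\mathfrak{C}^2\xrightarrow{I_{\mathfrak{C}}\otimes_A\Theta\otimes_AI_{\mathfrak{C}}}\mathfrak{C}^3\to\cdots,$$ where $\Theta(a)=ae=ea$ for an element $e\in\mathfrak{C}$ belonging to a Frobenius system $(\pi,e)$ of $\mathfrak{C}$, such that for every $k=1,2,\ldots$ the extension $\mathfrak{C}^{k-1}\to\mathfrak{C}^k$ is a Frobenius extension and $\mathfrak{C}^k$ is a Frobenius $\mathfrak{C}^{k-1}$-coring (with its $\mathfrak{C}^{k-1}$-bimodule structure induced by the ring map $\mathfrak{C}^{k-1}\to\mathfrak{C}^k$).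
   Context: An $A$-coring $\mathfrak{C}$ is an $(A,A)$-bimodule with coassociative, counital $(A,A)$-bimodule maps $\Delta:\mathfrak{C}\to\mathfrak{C}\otimes_A\mathfrak{C}$ and $\varepsilon:\mathfrak{C}\to A$; write $\Delta(c)=c_{(1)}\otimes_Ac_{(2)}$. Right $\mathfrak{C}$-comodules are right $A$-modules $M$ with right $A$-linear coassociative counital maps $M\to M\otimes_A\mathfrak{C}$, forming a category $\mathbf{M}^{\mathfrak{C}}$ with forgetful functor $F$ to right $A$-modules. A functor is Frobenius if some functor is both its left and right adjoint; $\mathfrak{C}$ is a Frobenius coring if $F$ is Frobenius. A Frobenius system for $\mathfrak{C}$ is a pair $(\pi,e)$ with $e\in\{c\mid ac=ca\ \forall a\in A\}$ and $\pi:\mathfrak{C}\otimes_A\mathfrak{C}\to\mathfrak{C}$ an $(A,A)$-bimodule map with $c_{(1)}\otimes_A\pi(c_{(2)}\otimes_Ac')=\Delta(\pi(c\otimes_Ac'))=\pi(c\otimes_Ac'_{(1)})\otimes_Ac'_{(2)}$ and $\pi(c\otimes_Ae)=\pi(e\otimes_Ac)=c$ for all $c,c'\in\mathfrak{C}$. A ring extension $R\to S$ is Frobenius if $S$ is a finitely generated projective right $R$-module and $S\cong\mathrm{Hom}_R(S,R)$ as $(R,S)$-bimodules; equivalently there are an $(R,R)$-bimodule map $E:S\to R$ and $\beta=\sum_is_i\otimes_R\bar s^i\in S\otimes_RS$ with $s\beta=\beta s$ and $\sum_iE(ss_i)\bar s^i=\sum_is_iE(\bar s^is)=s$ for all $s\in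 S$. *)

(* Defs.v *)
From HB Require Import structures.
From mathcomp Require Import all_boot all_algebra.
From mathcomp Require Import boolp.
Set Implicit Arguments. Unset Strict Implicit. Unset Printing Implicit Defensive.
Import GRing.Theory.
Local Open Scope ring_scope.

Section Tensor.
Context (R : Type) (M N : zmodType) (ra : M -> R -> M) (la : R -> N -> N).

Definition balanced (G : zmodType) (f : M -> N -> G) : Prop :=
  [/\ forall m n n', f m (n + n') = f m n + f m n',
      forall m m' n, f (m + m') n = f m n + f m' n
    & forall m r n, f (ra m r) n = f m (la r n)].

Definition teq (l1 l2 : seq (M * N)) : Prop :=
  forall (G : zmodType) (f : M -> N -> G), balanced f ->
    \sum_(p <- l1) f p.1 p.2 = \sum_(p <- l2) f p.1 p.2.

Definition tensor : Type := {P : seq (M * N) -> Prop | exists l, P = teq l}.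

Definition tclass (l : seq (M * N)) : tensor := exist _ (teq l) (ex_intro _ l erefl).
Definition trepr (x : tensor) : seq (M * N) :=
  proj1_sig (constructive_indefinite_description (proj2_sig x)).

Lemma teq_refl l : teq l l. Proof. by []. Qed.
Lemma teq_sym l1 l2 : teq l1 l2 -> teq l2 l1. Proof. by move=> h G f b; rewrite h. Qed.
Lemma teq_trans l1 l2 l3 : teq l1 l2 -> teq l2 l3 -> teq l1 l3.
Proof. by move=> h1 h2 G f b; rewrite h1 // h2. Qed.

Lemma tclass_eq l1 l2 : teq l1 l2 -> tclass l1 = tclass l2.
Proof.
move=> h; apply: eq_exist_uncurried; exists (funext (fun l => propext (conj
  (fun h' => teq_trans (teq_sym h) h') (fun h' => teq_trans h h')))).
exact: Prop_irrelevance.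
Qed.

Lemma treprK x : tclass (trepr x) = x.
Proof.
case: x => P hP; rewrite /trepr /=.
case: (constructive_indefinite_description _) => l /= e.
apply: eq_exist_uncurried; exists (esym e); exact: Prop_irrelevance.
Qed.

Lemma trepr_teq l : teq (trepr (tclass l)) l.
Proof.
rewrite /trepr /=; case: (constructive_indefinite_description _) => l' /= e.
by rewrite -e.
Qed.

Lemma teq_cat a b a' b' : teq a a' -> teq b b' -> teq (a ++ b) (a' ++ b').
Proof. by move=> h1 h2 G f bf; rewrite !big_cat /= h1 // h2. Qed.

Definition tzero : tensor := tclass [::].
Definition tadd (x y : tensor) : tensor := tclass (trepr x ++ trepr y).
Definition topp (x : tensor) : tensor :=
  tclass [seq (- p.1, p.2) | p <- trepr x].

Lemma tadd_class a b : tadd (tclass a) (tclass b) = tclass (a ++ b).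
Proof. by apply: tclass_eq; apply: teq_cat; apply: trepr_teq. Qed.

Lemma bal_oppl (G : zmodType) (f : M -> N -> G) : balanced f -> forall m n, f (- m) n = - f m n.
Proof.
case=> _ h _ m n.
have e := h 0 0 n; rewrite addr0 in e.
have h0 : f 0 n = 0 by have := subrr (f 0 n); rewrite {1}e addrK.
by apply/eqP; rewrite -subr_eq0 opprK -h addNr h0.
Qed.

Lemma topp_class a : topp (tclass a) = tclass [seq (- p.1, p.2) | p <- a].
Proof.
apply: tclass_eq => G f b; rewrite !big_map /=.
rewrite (eq_bigr (fun p => - f p.1 p.2)); last by move=> p _; rewrite bal_oppl.
rewrite [RHS](eq_bigr (fun p => - f p.1 p.2)); last by move=> p _; rewrite bal_oppl.
by rewrite !sumrN (@trepr_teq a G f b).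
Qed.

Lemma tensor_ind (P : tensor -> Prop) : (forall l, P (tclass l)) -> forall x, P x.
Proof. by move=> h x; rewrite -(treprK x). Qed.

Lemma taddA : associative tadd.
Proof.
elim/tensor_ind=> a; elim/tensor_ind=> b; elim/tensor_ind=> c.
by rewrite !tadd_class catA.
Qed.
Lemma taddC : commutative tadd.
Proof.
elim/tensor_ind=> a; elim/tensor_ind=> b; rewrite !tadd_class.
apply: tclass_eq => G f _; rewrite !big_cat /=. exact: addrC. Qed.
Lemma tadd0 : left_id tzero tadd.
Proof. by elim/tensor_ind=> a; rewrite tadd_class. Qed.
Lemma taddN : left_inverse tzero topp tadd.
Proof.
elim/tensor_ind=> a; rewrite topp_class tadd_class; apply: tclass_eq => G f b.
rewrite big_cat big_map /= big_nil.
rewrite (eq_bigr (fun p => - f p.1 p.2)); last by move=> p _; rewrite bal_oppl.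
by rewrite sumrN addNr.
Qed.

HB.instance Definition _ := gen_eqMixin tensor.
HB.instance Definition _ := gen_choiceMixin tensor.
HB.instance Definition _ := GRing.isZmodule.Build tensor taddA taddC tadd0 taddN.


Definition tmk (m : M) (n : N) : tensor := tclass [:: (m, n)].
Definition tlift (G : zmodType) (f : M -> N -> G) (x : tensor) : G :=
  \sum_(p <- trepr x) f p.1 p.2.

End Tensor.

Arguments tensor {R M N} ra la.
Arguments tmk {R M N ra la} m n.
Arguments tlift {R M N ra la G} f x.

Definition tlact {R S : Type} {M N : zmodType} {ra : M -> R -> M} {la : R -> N -> N}
  (laM : S -> M -> M) (s : S) (x : tensor ra la) : tensor ra la :=
  tlift (fun m n => tmk (laM s m) n) x.
Definition tract {R S : Type} {M N : zmodType} {ra : M -> R -> M} {la : R -> N -> N}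
  (raN : N -> S -> N) (x : tensor ra la) (s : S) : tensor ra la :=
  tlift (fun m n => tmk m (raN n s)) x.

Definition additive (M G : zmodType) (f : M -> G) : Prop :=
  forall x y, f (x + y) = f x + f y.

Definition is_ring (R : zmodType) (mul : R -> R -> R) (one : R) : Prop :=
  [/\ associative mul, left_id one mul, right_id one mul,
      left_distributive mul +%R & right_distributive mul +%R].

Definition is_rhom (R S : zmodType) (mulR : R -> R -> R) (oneR : R)
  (mulS : S -> S -> S) (oneS : S) (phi : R -> S) : Prop :=
  [/\ additive phi, forall a b, phi (mulR a b) = mulS (phi a) (phi b) & phi oneR = oneS].

Definition is_rmod (R : zmodType) (mul : R -> R -> R) (one : R)
  (M : zmodType) (ra : M -> R -> M) : Prop :=
  [/\ forall m r s, ra m (r + s) = ra m r + ra m s,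
      forall m m' r, ra (m + m') r = ra m r + ra m' r,
      forall m r s, ra (ra m r) s = ra m (mul r s)
    & forall m, ra m one = m].

Definition is_lmod (R : zmodType) (mul : R -> R -> R) (one : R)
  (M : zmodType) (la : R -> M -> M) : Prop :=
  [/\ forall r s m, la (r + s) m = la r m + la s m,
      forall r m m', la r (m + m') = la r m + la r m',
      forall r s m, la r (la s m) = la (mul r s) m
    & forall m, la one m = m].

Definition is_bimod (R : zmodType) (mul : R -> R -> R) (one : R)
  (M : zmodType) (la : R -> M -> M) (ra : M -> R -> M) : Prop :=
  [/\ is_lmod mul one la, is_rmod mul one ra & forall r m s, ra (la r m) s = la r (ra m s)].

Section Coring.
Context (R : zmodType) (mulR : R -> R -> R) (oneR : R)
  (C : zmodType) (la : R -> C -> C) (ra : C -> R -> C)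
  (Delta : C -> tensor ra la) (eps : C -> R).

Definition is_coring : Prop :=
  [/\ is_bimod mulR oneR la ra,
      [/\ additive Delta,
          forall r c, Delta (la r c) = tlact la r (Delta c)
        & forall c r, Delta (ra c r) = tract ra (Delta c) r],
      [/\ additive eps,
          forall r c, eps (la r c) = mulR r (eps c)
        & forall c r, eps (ra c r) = mulR (eps c) r],
      (* coassociativity, (Delta ⊗ I) ∘ Delta = (I ⊗ Delta) ∘ Delta up to the
         canonical associator (C ⊗ C) ⊗ C ≅ C ⊗ (C ⊗ C) *)
      forall c,
        tlift (fun c1 c2 => tlift (fun a b => tmk (ra:=ra) (la:=tlact la) a (tmk b c2)) (Delta c1)) (Delta c)
        = tlift (fun c1 c2 => tmk (ra:=ra) (la:=tlact la) c1 (Delta c2)) (Delta c)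
    & forall c, tlift (fun c1 c2 => la (eps c1) c2) (Delta c) = c /\
                tlift (fun c1 c2 => ra c1 (eps c2)) (Delta c) = c].

Record rmodule := RModule {
  rm_car :> zmodType;
  rm_act : rm_car -> R -> rm_car;
  rm_ax : is_rmod mulR oneR rm_act }.

Record comodule := Comodule {
  cm_car :> zmodType;
  cm_act : cm_car -> R -> cm_car;
  cm_rho : cm_car -> tensor cm_act la;
  cm_rmod : is_rmod mulR oneR cm_act;
  cm_ax : [/\ additive cm_rho,
              forall m r, cm_rho (cm_act m r) = tract ra (cm_rho m) r,
              forall m, tlift (fun m0 c => tlift (fun m' c' =>
                           tmk (ra:=cm_act) (la:=tlact la) m' (tmk c' c)) (cm_rho m0)) (cm_rho m)
                        = tlift (fun m0 c => tmk (ra:=cm_act) (la:=tlact la) m0 (Delta c)) (cm_rho m)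
            & forall m, tlift (fun m0 c => cm_act m0 (eps c)) (cm_rho m) = m] }.

Definition rhom (M N : rmodule) (f : M -> N) : Prop :=
  additive f /\ forall m r, f (rm_act m r) = rm_act (f m) r.

Definition forget (X : comodule) : rmodule := RModule (cm_rmod X).

Definition chom (X Y : comodule) (f : X -> Y) : Prop :=
  rhom (M := forget X) (N := forget Y) f /\
  forall x, @cm_rho Y (f x) = tlift (fun m c => tmk (f m) c) (@cm_rho X x).

(* F -| G, for F the forgetful functor comodules -> right R-modules *)
Definition forget_left_adjoint (G : rmodule -> comodule)
  (Gm : forall N N' : rmodule, (N -> N') -> G N -> G N') : Prop :=
  exists (phi : forall (X : comodule) (N : rmodule), (X -> N) -> X -> G N)
         (psi : forall (X : comodule) (N : rmodule), (X -> G N) -> X -> N),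
  [/\ forall X N f, rhom (M := forget X) f -> chom (phi X N f),
      forall X N g, chom g -> rhom (M := forget X) (psi X N g),
      forall X N f, rhom (M := forget X) f -> psi X N (phi X N f) = f,
      forall X N g, chom g -> phi X N (psi X N g) = g
    & forall (X X' : comodule) (N N' : rmodule) (h : X' -> X) (f : X -> N) (g : N -> N'),
        chom h -> rhom (M := forget X) f -> rhom g ->
        phi X' N' (g \o f \o h) = Gm N N' g \o phi X N f \o h].

(* G -| F *)
Definition forget_right_adjoint (G : rmodule -> comodule)
  (Gm : forall N N' : rmodule, (N -> N') -> G N -> G N') : Prop :=
  exists (phi : forall (N : rmodule) (X : comodule), (G N -> X) -> N -> X)
         (psi : forall (N : rmodule) (X : comodule), (N -> X) -> G N -> X),
  [/\ forall N X f, chom f -> rhom (N := forget X) (phi N X f),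
      forall N X g, rhom (N := forget X) g -> chom (psi N X g),
      forall N X f, chom f -> psi N X (phi N X f) = f,
      forall N X g, rhom (N := forget X) g -> phi N X (psi N X g) = g
    & forall (N N' : rmodule) (X X' : comodule) (h : N' -> N) (f : G N -> X) (g : X -> X'),
        rhom h -> chom f -> chom g ->
        phi N' X' (g \o f \o Gm N' N h) = g \o phi N X f \o h].

(* C is a Frobenius coring: the forgetful functor is Frobenius *)
Definition frobenius_coring : Prop :=
  exists (G : rmodule -> comodule) (Gm : forall N N' : rmodule, (N -> N') -> G N -> G N'),
  [/\ forall N N' g, rhom g -> chom (Gm N N' g),
      forall N : rmodule, Gm N N id = id,
      forall (N N' N'' : rmodule) (g : N -> N') (g' : N' -> N''),
        rhom g -> rhom g' -> Gm N N'' (g' \o g) = Gm N' N'' g' \o Gm N N' g,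
      forget_left_adjoint Gm
    & forget_right_adjoint Gm].

End Coring.

Definition frobenius_extension (R S : zmodType) (mulR : R -> R -> R) (oneR : R)
  (mulS : S -> S -> S) (oneS : S) (phi : R -> S) : Prop :=
  (* S is a finitely generated projective right R-module (s.r := s * phi r):
     a direct summand of some R^n *)
  (exists (n : nat) (p : S -> 'I_n -> R) (q : ('I_n -> R) -> S),
     [/\ forall s s' i, p (s + s') i = p s i + p s' i,
         forall s r i, p (mulS s (phi r)) i = mulR (p s i) r,
         forall v w, q (fun i => v i + w i) = q v + q w,
         forall v r, q (fun i => mulR (v i) r) = mulS (q v) (phi r)
       & forall s, q (p s) = s]) /\
  (* S ≅ Hom_R(S, R) as (R, S)-bimodules, where (r.f.s)(x) = r * f (s * x) *)
  (exists Phi : S -> S -> R,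
     [/\ forall s, additive (Phi s) /\ forall x r, Phi s (mulS x (phi r)) = mulR (Phi s x) r,
         forall s s', Phi (s + s') = (fun x => Phi s x + Phi s' x),
         injective Phi,
         forall g : S -> R, additive g -> (forall x r, g (mulS x (phi r)) = mulR (g x) r) ->
           exists s, Phi s = g
       & (forall r s, Phi (mulS (phi r) s) = (fun x => mulR r (Phi s x))) /\
         (forall s s', Phi (mulS s s') = (fun x => Phi s (mulS s' x)))]).

Definition frobenius_system (R : zmodType) (C : zmodType) (la : R -> C -> C) (ra : C -> R -> C)
  (Delta : C -> tensor ra la) (pi : tensor ra la -> C) (e : C) : Prop :=
  [/\ forall r, la r e = ra e r,
      [/\ additive pi, forall r x, pi (tlact la r x) = la r (pi x)
        & forall x r, pi (tract ra x r) = ra (pi x) r],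
      forall c c', tlift (fun c1 c2 => tmk c1 (pi (tmk c2 c'))) (Delta c) = Delta (pi (tmk c c')),
      forall c c', Delta (pi (tmk c c')) = tlift (fun d1 d2 => tmk (pi (tmk c d1)) d2) (Delta c')
    & forall c, pi (tmk c e) = c /\ pi (tmk e c) = c].

(* Tensor powers: Cpos n = C^{n+1} = (..((C ⊗_A C) ⊗_A C) .. ) ⊗_A C, with
   its right A-action; Cpow 0 = A, Cpow (n+1) = Cpos n. *)
Fixpoint Cpos (A : pzRingType) (C : zmodType) (la : A -> C -> C) (ra : C -> A -> C) (n : nat)
  : {M : zmodType & M -> A -> M} :=
  match n with
  | 0 => existT (fun M : zmodType => M -> A -> M) C ra
  | n'.+1 => existT (fun M : zmodType => M -> A -> M)
               (tensor (projT2 (Cpos la ra n')) la : zmodType) (tract ra)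
  end.

Definition Cpow (A : pzRingType) (C : zmodType) (la : A -> C -> C) (ra : C -> A -> C) (k : nat)
  : zmodType :=
  match k with
  | 0 => (A : zmodType)
  | n.+1 => projT1 (Cpos la ra n)
  end.

(* Main.v *)
Require Import Defs.
From HB Require Import structures.
From mathcomp Require Import all_boot all_algebra.
From mathcomp Require Import boolp.
Set Implicit Arguments. Unset Strict Implicit. Unset Printing Implicit Defensive.
Import GRing.Theory.
Local Open Scope ring_scope.
Notation additive := Defs.additive.



Lemma additive0 (M G : zmodType) (f : M -> G) : additive f -> f 0 = 0.
Proof.
move=> h; have := h 0 0; rewrite addr0 => e.
by have := subrr (f 0); rewrite {1}e addrK.
Qed.

Lemma additiveN (M G : zmodType) (f : M -> G) : additive f -> forall x, f (- x) = - f x.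
Proof.
move=> h x; apply/eqP; rewrite -subr_eq0 opprK -h addNr.
by rewrite (additive0 h).
Qed.

Lemma additive_sum (M G : zmodType) (f : M -> G) (I : Type) (l : seq I) (F : I -> M) :
  additive f -> f (\sum_(i <- l) F i) = \sum_(i <- l) f (F i).
Proof.
move=> h; elim: l => [|i l IH]; first by rewrite !big_nil (additive0 h).
by rewrite !big_cons h IH.
Qed.

Section TensorLemmas.
Context (R : Type) (M N : zmodType) (ra : M -> R -> M) (la : R -> N -> N).
Local Notation T := (tensor ra la).

Lemma addTE (x y : T) : x + y = tadd x y. Proof. by []. Qed.
Lemma zeroTE : (0 : T) = tzero ra la. Proof. by []. Qed.

Lemma tclass_nil : tclass ra la [::] = 0. Proof. by []. Qed.

Lemma tclass_cons p l : tclass ra la (p :: l) = tmk p.1 p.2 + tclass ra la l.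
Proof. by case: p => a b; rewrite addTE /tmk tadd_class. Qed.

Lemma tclass_cat l l' : tclass ra la (l ++ l') = tclass ra la l + tclass ra la l'.
Proof. by rewrite addTE tadd_class. Qed.

Lemma tlift_class (G : zmodType) (f : M -> N -> G) : balanced ra la f ->
  forall l, tlift f (tclass ra la l) = \sum_(p <- l) f p.1 p.2.
Proof. by move=> b l; rewrite /tlift (@trepr_teq _ _ _ ra la l G f b). Qed.

Lemma tlift_tmk (G : zmodType) (f : M -> N -> G) : balanced ra la f ->
  forall m n, tlift f (tmk (ra:=ra) (la:=la) m n) = f m n.
Proof. by move=> b m n; rewrite /tmk tlift_class // big_seq1. Qed.

Lemma tlift_additive (G : zmodType) (f : M -> N -> G) : balanced ra la f ->
  additive (tlift (ra:=ra) (la:=la) f).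
Proof.
move=> b x y; rewrite -(treprK x) -(treprK y) addTE tadd_class !tlift_class //.
by rewrite big_cat.
Qed.

Lemma tlift_comp (G H : zmodType) (f : M -> N -> G) (h : G -> H) : additive h ->
  forall x : T, h (tlift f x) = tlift (fun m n => h (f m n)) x.
Proof. by move=> ha x; rewrite /tlift additive_sum. Qed.

Lemma tlift_ext (G : zmodType) (f g : M -> N -> G) : (forall m n, f m n = g m n) ->
  forall x : T, tlift f x = tlift g x.
Proof. by move=> h x; rewrite /tlift; apply: eq_bigr => p _; rewrite h. Qed.

Lemma tensor_ind0 (P : T -> Prop) : P 0 -> (forall m n x, P x -> P (tmk m n + x)) ->
  forall x, P x.
Proof.
move=> h0 hS; elim/tensor_ind => l; elim: l => [|p l IH]; first by rewrite tclass_nil.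
by rewrite tclass_cons; apply: hS.
Qed.

Lemma tensor_ext (G : zmodType) (F F' : T -> G) : additive F -> additive F' ->
  (forall m n, F (tmk m n) = F' (tmk m n)) -> forall x, F x = F' x.
Proof.
move=> hF hF' h; elim/tensor_ind0; first by rewrite (additive0 hF) (additive0 hF').
by move=> m n x IH; rewrite hF hF' h IH.
Qed.

Lemma tmkDr m n n' : tmk (ra:=ra) (la:=la) m (n + n') = tmk m n + tmk m n'.
Proof.
rewrite /tmk addTE tadd_class; apply: tclass_eq => G f [h _ _].
by rewrite big_seq1 /= big_cons big_seq1 h.
Qed.

Lemma tmkDl m m' n : tmk (ra:=ra) (la:=la) (m + m') n = tmk m n + tmk m' n.
Proof.
rewrite /tmk addTE tadd_class; apply: tclass_eq => G f [_ h _].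
by rewrite big_seq1 /= big_cons big_seq1 h.
Qed.

Lemma tmk_mid m r n : tmk (ra:=ra) (la:=la) (ra m r) n = tmk m (la r n).
Proof. by rewrite /tmk; apply: tclass_eq => G f [_ _ h]; rewrite !big_seq1 /= h. Qed.

Lemma tmk_bal : balanced ra la (@tmk _ _ _ ra la).
Proof. by split; [exact: tmkDr | exact: tmkDl | exact: tmk_mid]. Qed.

Lemma tmk0l n : tmk (ra:=ra) (la:=la) 0 n = 0.
Proof. exact: (additive0 (f := fun m => tmk m n)) (fun m m' => tmkDl m m' n). Qed.
Lemma tmk0r m : tmk (ra:=ra) (la:=la) m 0 = 0.
Proof. exact: (additive0 (f := fun n => tmk m n)) (fun n n' => tmkDr m n n'). Qed.

Lemma tlift_tmkE (x : T) : tlift (fun m n => tmk (ra:=ra) (la:=la) m n) x = x.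
Proof.
move: x; apply: tensor_ext; first exact: tlift_additive tmk_bal.
  by move=> ??.
by move=> m n; rewrite tlift_tmk //; exact: tmk_bal.
Qed.

Lemma tlift0 (G : zmodType) (f : M -> N -> G) : balanced ra la f -> tlift f (0 : T) = 0.
Proof. by move=> b; rewrite (additive0 (tlift_additive b)). Qed.

Lemma mkbal (G : zmodType) (f : M -> N -> G) :
  (forall m, additive (f m)) -> (forall n, additive (fun m => f m n)) ->
  (forall m r n, f (ra m r) n = f m (la r n)) -> balanced ra la f.
Proof. by move=> h1 h2 h3; split=> // m m' n; apply: h2. Qed.

End TensorLemmas.

Arguments tlift_additive {R M N ra la G f}.

Lemma tlift_tlift (R : Type) (M N : zmodType) (ra : M -> R -> M) (la : R -> N -> N)
  (R' : Type) (M' N' : zmodType) (ra' : M' -> R' -> M') (la' : R' -> N' -> N')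
  (G : zmodType) (F : M' -> N' -> G) (g : M -> N -> tensor ra' la') :
  balanced ra' la' F -> forall x : tensor ra la,
  tlift F (tlift g x) = tlift (fun m n => tlift F (g m n)) x.
Proof. by move=> b x; rewrite tlift_comp //; exact: tlift_additive b. Qed.

Lemma tlift_addf (R : Type) (M N G : zmodType) (ra : M -> R -> M) (la : R -> N -> N)
  (f g : M -> N -> G) (x : tensor ra la) :
  tlift (fun m n => f m n + g m n) x = tlift f x + tlift g x.
Proof. by rewrite /tlift big_split. Qed.

Section Actions.
Context (R S : Type) (M N : zmodType) (ra : M -> R -> M) (la : R -> N -> N).

Lemma tlact_bal (laM : S -> M -> M) s :
  additive (laM s) -> (forall m r, laM s (ra m r) = ra (laM s m) r) ->
  balanced ra la (fun m n => tmk (ra:=ra) (la:=la) (laM s m) n).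
Proof.
move=> h1 h2; apply: mkbal => [m n n'|n m m'|m r n]; first exact: tmkDr.
  by rewrite h1 tmkDl.
by rewrite h2 tmk_mid.
Qed.

Lemma tlact_tmk (laM : S -> M -> M) s m n :
  additive (laM s) -> (forall m r, laM s (ra m r) = ra (laM s m) r) ->
  tlact (ra:=ra) (la:=la) laM s (tmk m n) = tmk (laM s m) n.
Proof. by move=> h1 h2; rewrite /tlact tlift_tmk //; exact: tlact_bal. Qed.

Lemma tlact_add (laM : S -> M -> M) s :
  additive (laM s) -> (forall m r, laM s (ra m r) = ra (laM s m) r) ->
  additive (tlact (ra:=ra) (la:=la) laM s).
Proof. by move=> h1 h2; apply: tlift_additive; exact: tlact_bal. Qed.

Lemma tract_bal (raN : N -> S -> N) s :
  additive (raN ^~ s) -> (forall r n, la r (raN n s) = raN (la r n) s) ->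
  balanced ra la (fun m n => tmk (ra:=ra) (la:=la) m (raN n s)).
Proof.
move=> h1 h2; apply: mkbal => [m n n'|n m m'|m r n]; first by rewrite h1 tmkDr.
  exact: tmkDl.
by rewrite tmk_mid h2.
Qed.

Lemma tract_tmk (raN : N -> S -> N) s m n :
  additive (raN ^~ s) -> (forall r n, la r (raN n s) = raN (la r n) s) ->
  tract (ra:=ra) (la:=la) raN (tmk m n) s = tmk m (raN n s).
Proof. by move=> h1 h2; rewrite /tract tlift_tmk //; exact: tract_bal. Qed.

Lemma tract_add (raN : N -> S -> N) s :
  additive (raN ^~ s) -> (forall r n, la r (raN n s) = raN (la r n) s) ->
  additive (fun x => tract (ra:=ra) (la:=la) raN x s).
Proof. by move=> h1 h2; apply: tlift_additive; exact: tract_bal. Qed.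

End Actions.

Section RingFacts.
Context (R : zmodType) (mul : R -> R -> R) (one : R) (H : is_ring mul one).

Lemma rA : associative mul. Proof. by case: H. Qed.
Lemma r1l : left_id one mul. Proof. by case: H. Qed.
Lemma r1r : right_id one mul. Proof. by case: H. Qed.
Lemma rDl x y z : mul (x + y) z = mul x z + mul y z. Proof. by case: H => _ _ _ h _; apply: h. Qed.
Lemma rDr x y z : mul x (y + z) = mul x y + mul x z. Proof. by case: H => _ _ _ _ h; apply: h. Qed.
Lemma radl z : additive (mul ^~ z). Proof. by move=> x y; rewrite rDl. Qed.
Lemma radr x : additive (mul x). Proof. by move=> y z; rewrite rDr. Qed.
Lemma r0l x : mul 0 x = 0. Proof. exact: (additive0 (radl x)). Qed.
Lemma r0r x : mul x 0 = 0. Proof. exact: (additive0 (radr x)). Qed.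

End RingFacts.

Lemma Aring (A : pzRingType) : is_ring ( *%R : A -> A -> A) 1.
Proof. by split; [exact: mulrA | exact: mul1r | exact: mulr1 | exact: mulrDl | exact: mulrDr]. Qed.

Arguments tlact_tmk {R S M N ra la laM s m n}.
Arguments tract_tmk {R S M N ra la raN s m n}.
Arguments tlact_bal {R S M N ra la laM s}.
Arguments tract_bal {R S M N ra la raN s}.
Arguments tlift_comp {R M N ra la G H f h}.
Arguments tlift_tlift {R M N ra la R' M' N' ra' la' G F g}.

Section MoreActions.
Context (R S : Type) (M N : zmodType) (ra : M -> R -> M) (la : R -> N -> N).

Lemma tlift_tlact (G : zmodType) (F : M -> N -> G) (laM : S -> M -> M) s (x : tensor ra la) :
  balanced ra la F -> tlift F (tlact laM s x) = tlift (fun m n => F (laM s m) n) x.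
Proof. by move=> b; rewrite /tlact tlift_tlift //; apply: tlift_ext => m n; rewrite tlift_tmk. Qed.

Lemma tlift_tract (G : zmodType) (F : M -> N -> G) (raN : N -> S -> N) s (x : tensor ra la) :
  balanced ra la F -> tlift F (tract raN x s) = tlift (fun m n => F m (raN n s)) x.
Proof. by move=> b; rewrite /tract tlift_tlift //; apply: tlift_ext => m n; rewrite tlift_tmk. Qed.

End MoreActions.

Lemma tlact_addl (R : Type) (S M N : zmodType) (ra : M -> R -> M) (la : R -> N -> N)
  (laM : S -> M -> M) (x : tensor ra la) :
  (forall m, additive (laM ^~ m)) -> additive (fun s => tlact laM s x).
Proof.
move=> h s s'; rewrite /tlact -tlift_addf; apply: tlift_ext => m n.
by rewrite h tmkDl.
Qed.

Lemma tract_addr (R : Type) (S M N : zmodType) (ra : M -> R -> M) (la : R -> N -> N)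
  (raN : N -> S -> N) (x : tensor ra la) :
  (forall n, additive (raN n)) -> additive (fun s => tract raN x s).
Proof.
move=> h s s'; rewrite /tract -tlift_addf; apply: tlift_ext => m n.
by rewrite h tmkDr.
Qed.

Lemma tlift_swap (R1 R2 : Type) (M1 N1 M2 N2 G : zmodType)
  (ra1 : M1 -> R1 -> M1) (la1 : R1 -> N1 -> N1) (ra2 : M2 -> R2 -> M2) (la2 : R2 -> N2 -> N2)
  (F : M1 -> N1 -> M2 -> N2 -> G) (x : tensor ra1 la1) (y : tensor ra2 la2) :
  tlift (fun a b => tlift (fun c d => F a b c d) y) x =
  tlift (fun c d => tlift (fun a b => F a b c d) x) y.
Proof. rewrite /tlift; exact: exchange_big. Qed.

Lemma rhom_bimod (R S : zmodType) (mR : R -> R -> R) oR (mS : S -> S -> S) oS ph :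
  is_ring mR oR -> is_ring mS oS -> is_rhom mR oR mS oS ph ->
  is_bimod mR oR (fun r s => mS (ph r) s) (fun s r => mS s (ph r)).
Proof.
move=> HR HS [pA pM p1]; split; first split.
- by move=> r r' s; rewrite pA (rDl HS).
- by move=> r s s'; rewrite (rDr HS).
- by move=> r r' s; rewrite pM (rA HS).
- by move=> s; rewrite p1 (r1l HS).
- split.
  + by move=> s r r'; rewrite pA (rDr HS).
  + by move=> s s' r; rewrite (rDl HS).
  + by move=> s r r'; rewrite pM (rA HS).
  + by move=> s; rewrite p1 (r1r HS).
- by move=> r s r'; rewrite (rA HS).
Qed.

Lemma rhom_comp (R S U : zmodType) (mR : R -> R -> R) oR (mS : S -> S -> S) oS
  (mU : U -> U -> U) oU f g :
  is_rhom mR oR mS oS f -> is_rhom mS oS mU oU g -> is_rhom mR oR mU oU (fun x => g (f x)).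
Proof.
move=> [fA fM f1] [gA gM g1]; split; first by move=> x y; rewrite fA gA.
  by move=> x y; rewrite fM gM.
by rewrite f1 g1.
Qed.

Record Inv (A : pzRingType) (C : zmodType) (la : A -> C -> C) (ra : C -> A -> C)
  (R S : zmodType) (mR : R -> R -> R) (oR : R) (mS : S -> S -> S) (oS : S)
  (ph : R -> S) (th : A -> R) (raR : R -> A -> R) (raS : S -> A -> S)
  (DS : S -> tensor (fun s r => mS s (ph r)) (fun r s => mS (ph r) s)) (eS : S -> R)
  (j : C -> S) (dec : S -> tensor raR la) : Prop := {
  i_HR : is_ring mR oR;
  i_HS : is_ring mS oS;
  i_Hph : is_rhom mR oR mS oS ph;
  i_Hth : is_rhom ( *%R) 1 mR oR th;
  i_HraR : forall r a, raR r a = mR r (th a);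
  i_HraS : forall s a, raS s a = mS s (ph (th a));
  i_Hcor : is_coring mR oR DS eS;
  i_HDl : forall s s', DS (mS s s') = tlact mS s (DS s');
  i_HDr : forall s s', DS (mS s s') = tract mS (DS s) s';
  i_Hj : additive j;
  i_Hjl : forall a c, j (la a c) = mS (ph (th a)) (j c);
  i_Hjr : forall c a, j (ra c a) = mS (j c) (ph (th a));
  i_Hdec : additive dec;
  i_Hrec : forall s, tlift (fun r c => mS (ph r) (j c)) (dec s) = s;
  i_Hdecg : forall r c, dec (mS (ph r) (j c)) = tmk r c }.

Section Step.
Context (A : pzRingType) (C : zmodType) (la : A -> C -> C) (ra : C -> A -> C).
Context (R S : zmodType) (mR : R -> R -> R) (oR : R) (mS : S -> S -> S) (oS : S)
  (ph : R -> S) (th : A -> R) (raR : R -> A -> R) (raS : S -> A -> S).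
Local Notation rS := (fun s r => mS s (ph r)).
Local Notation lS := (fun r s => mS (ph r) s).
Context (DS : S -> tensor rS lS) (eS : S -> R) (j : C -> S) (dec : S -> tensor raR la).
Hypotheses (HR : is_ring mR oR) (HS : is_ring mS oS) (Hph : is_rhom mR oR mS oS ph)
  (Hth : is_rhom ( *%R) 1 mR oR th)
  (HraR : forall r a, raR r a = mR r (th a)) (HraS : forall s a, raS s a = mS s (ph (th a)))
  (Hcor : is_coring mR oR DS eS)
  (HDl : forall s s', DS (mS s s') = tlact mS s (DS s'))
  (HDr : forall s s', DS (mS s s') = tract mS (DS s) s')
  (Hj : additive j) (Hjl : forall a c, j (la a c) = mS (ph (th a)) (j c))
  (Hjr : forall c a, j (ra c a) = mS (j c) (ph (th a)))
  (Hdec : additive dec)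
  (Hrec : forall s, tlift (fun r c => mS (ph r) (j c)) (dec s) = s)
  (Hdecg : forall r c, dec (mS (ph r) (j c)) = tmk r c).

Local Notation T := (tensor raS la).
Local Notation tmkT := (@tmk A S C raS la).

Let mSA := rA HS.
Let phA : additive ph. Proof. by case: Hph => h _ _. Qed.
Let phM x y : ph (mR x y) = mS (ph x) (ph y). Proof. by case: Hph => _ h _. Qed.
Let ph1 : ph oR = oS. Proof. by case: Hph => _ _ h. Qed.
Let DSA : additive DS. Proof. by case: Hcor => _ [h _ _]. Qed.
Let eSA : additive eS. Proof. by case: Hcor => _ _ [h _ _]. Qed.
Let eSl r s : eS (mS (ph r) s) = mR r (eS s). Proof. by case: Hcor => _ _ [_ h _] _ _; apply: h. Qed.
Let eSr s r : eS (mS s (ph r)) = mR (eS s) r. Proof. by case: Hcor => _ _ [_ _ h] _ _; apply: h. Qed.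
Let cuL s : tlift (fun c1 c2 => mS (ph (eS c1)) c2) (DS s) = s.
Proof. by case: Hcor => _ _ _ _ h; case: (h s). Qed.
Let cuR s : tlift (fun c1 c2 => mS c1 (ph (eS c2))) (DS s) = s.
Proof. by case: Hcor => _ _ _ _ h; case: (h s). Qed.
Let mSadl z : additive (mS ^~ z). Proof. exact: (radl HS). Qed.
Let mSadr z : additive (mS z). Proof. exact: (radr HS). Qed.

Lemma S_ext (G : zmodType) (F F' : S -> G) : additive F -> additive F' ->
  (forall r c, F (mS (ph r) (j c)) = F' (mS (ph r) (j c))) -> forall s, F s = F' s.
Proof.
move=> hF hF' h s; rewrite -(Hrec s) (tlift_comp hF) (tlift_comp hF').
exact: tlift_ext.
Qed.

Let raS_comm s0 : forall m a, mS s0 (raS m a) = raS (mS s0 m) a.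
Proof. by move=> m a; rewrite !HraS mSA. Qed.

Definition io (s s' : S) : T := tlift (fun r c => tmkT (mS s (ph r)) c) (dec s').

Let io_bal s : balanced raR la (fun r c => tmkT (mS s (ph r)) c).
Proof.
apply: mkbal => [r c c'|c r r'|r a c]; first exact: tmkDr.
  by rewrite phA (rDr HS) tmkDl.
by rewrite HraR phM mSA -HraS tmk_mid.
Qed.

Lemma io_gen s r c : io s (mS (ph r) (j c)) = tmkT (mS s (ph r)) c.
Proof. by rewrite /io Hdecg tlift_tmk. Qed.

Lemma io_addr s : additive (io s).
Proof. by move=> x y; rewrite /io Hdec (tlift_additive (io_bal s)). Qed.

Lemma io_addl s' : additive (io ^~ s').
Proof.
move=> x y; rewrite /io -tlift_addf; apply: tlift_ext => r c.
by rewrite (rDl HS) tmkDl.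
Qed.

Lemma io_mid s r s' : io (mS s (ph r)) s' = io s (mS (ph r) s').
Proof.
move: s'; apply: S_ext; first exact: io_addr.
  by move=> x y; rewrite (rDr HS) io_addr.
by move=> r' c; rewrite io_gen mSA -phM io_gen phM mSA.
Qed.

Lemma io_j s c : io s (j c) = tmkT s c.
Proof. by rewrite -[j c](r1l HS) -ph1 io_gen ph1 (r1r HS). Qed.

Lemma io_l s0 s s' : io (mS s0 s) s' = tlact mS s0 (io s s').
Proof.
move: s'; apply: S_ext; first exact: io_addr.
  by move=> x y; rewrite io_addr (tlact_add (mSadr s0) (raS_comm s0)).
by move=> r c; rewrite !io_gen (tlact_tmk (mSadr s0) (raS_comm s0)) mSA.
Qed.

Let io_balS : balanced rS lS io.
Proof.
apply: mkbal => [x y y'|y x x'|x r y]; first exact: io_addr.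
  exact: io_addl.
exact: io_mid.
Qed.

Lemma io_balS' : balanced rS lS io. Proof. exact: io_balS. Qed.

Definition inner (s : S) (c : C) (s' : S) (c' : C) : T :=
  tmkT (mS s (ph (eS (mS (j c) s')))) c'.

Let inner_bal s c : balanced raS la (inner s c).
Proof.
rewrite /inner; apply: mkbal => [s' x y|y x x'|s' a c']; first exact: tmkDr.
  by rewrite (rDr HS) eSA phA (rDr HS) tmkDl.
by rewrite HraS mSA eSr phM mSA -HraS tmk_mid.
Qed.

Definition mT (t t' : T) : T :=
  tlift (ra:=raS) (la:=la) (fun (s : S) (c : C) => tlift (ra:=raS) (la:=la) (inner s c) t') t.

Let outer_bal (t' : T) : balanced raS la (fun s c => tlift (inner s c) t').
Proof.
apply: mkbal => [s c c'|c s s'|s a c].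
- rewrite -tlift_addf; apply: tlift_ext => x y.
  by rewrite /inner Hj (rDl HS) eSA phA (rDr HS) tmkDl.
- rewrite -tlift_addf; apply: tlift_ext => x y.
  by rewrite /inner (rDl HS) tmkDl.
- apply: tlift_ext => x y.
  by rewrite /inner HraS Hjl -!mSA eSl phM.
Qed.

Lemma mT_tmk s c s' c' : mT (tmkT s c) (tmkT s' c') = inner s c s' c'.
Proof. by rewrite /mT tlift_tmk // tlift_tmk. Qed.

Lemma mT_tmkl s c t' : mT (tmkT s c) t' = tlift (inner s c) t'.
Proof. by rewrite /mT tlift_tmk. Qed.

Lemma mT_tmkr s' c' t : mT t (tmkT s' c') = tlift (fun s c => inner s c s' c') t.
Proof. by rewrite /mT; apply: tlift_ext => s c; rewrite tlift_tmk. Qed.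

Lemma mT_addl t' : additive (mT ^~ t').
Proof. exact: (tlift_additive (outer_bal t')). Qed.

Lemma mT_addr t : additive (mT t).
Proof.
move=> x y; rewrite /mT -tlift_addf; apply: tlift_ext => s c.
exact: (tlift_additive (inner_bal s c)).
Qed.

Definition phT (s : S) : T := tlift io (DS s).

Lemma phT_add : additive phT.
Proof. by move=> x y; rewrite /phT DSA (tlift_additive io_balS). Qed.

Lemma io_counit x y : tlift (fun a b => io (mS x (ph (eS a))) b) (DS y) = io x y.
Proof.
rewrite (tlift_ext (g := fun a b => io x (mS (ph (eS a)) b))); last by move=> a b; rewrite io_mid.
by rewrite -(tlift_comp (io_addr x)) cuL.
Qed.

Let F1_bal : balanced rS lS (fun a b => mS a (ph (eS b))).
Proof.
apply: mkbal => [a b b'|b a a'|a r b]; first by rewrite eSA phA (rDr HS).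
  by rewrite (rDl HS).
by rewrite /= eSl phM !mSA.
Qed.

Lemma mT_io_tmk a b s' c' :
  mT (io a b) (tmkT s' c') = tmkT (mS a (ph (eS (mS b s')))) c'.
Proof.
move: b; apply: S_ext.
- by move=> x y /=; rewrite io_addr mT_addl.
- by move=> x y /=; rewrite (rDl HS) eSA phA (rDr HS) tmkDl.
move=> r c; rewrite io_gen mT_tmk /inner; congr tmk.
by rewrite -[in RHS]mSA eSl phM mSA.
Qed.

Lemma mT_phT_l s t : mT (phT s) t = tlact mS s t.
Proof.
move: t; apply: tensor_ext; first exact: mT_addr.
  exact: (tlact_add (mSadr s) (raS_comm s)).
move=> s' c'; rewrite (tlact_tmk (mSadr s) (raS_comm s)).
rewrite /phT (tlift_comp (mT_addl _)).
rewrite (tlift_ext (g := fun a b => tmkT (mS a (ph (eS (mS b s')))) c')); last first.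
  by move=> a b; rewrite mT_io_tmk.
rewrite -(tlift_comp (h := fun y => tmkT y c')); last by move=> x y; rewrite tmkDl.
congr tmk.
have -> : tlift (fun a b => mS a (ph (eS (mS b s')))) (DS s) =
          tlift (fun a b => mS a (ph (eS b))) (tract mS (DS s) s').
  rewrite /tract tlift_tlift //; apply: tlift_ext => a b.
  rewrite tlift_tmk //.
by rewrite -HDr cuR.
Qed.

Lemma mT_tmk' s c s' c' :
  mT (tmkT s c) (tmkT s' c') = tmkT (mS s (ph (eS (mS (j c) s')))) c'.
Proof. exact: mT_tmk. Qed.

Lemma inner_io x c a b : tlift (inner x c) (io a b) = io (mS x (ph (eS (mS (j c) a)))) b.
Proof.
move: b; apply: S_ext.
- by move=> y z; rewrite io_addr (tlift_additive (inner_bal x c)).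
- exact: io_addr.
move=> r c''; rewrite !io_gen tlift_tmk // /inner; congr tmk.
by rewrite mSA eSr phM mSA.
Qed.

Let F2_bal x : balanced rS lS (fun a b => io (mS x (ph (eS a))) b).
Proof.
apply: mkbal => [a b b'|b a a'|a r b]; first exact: io_addr.
  by rewrite eSA phA (rDr HS) io_addl.
by rewrite /= eSr phM mSA io_mid.
Qed.

Lemma mT_phT_r_tmk x c s : mT (tmkT x c) (phT s) = io x (mS (j c) s).
Proof.
rewrite mT_tmkl /phT tlift_tlift; last exact: inner_bal.
rewrite (tlift_ext (g := fun a b => io (mS x (ph (eS (mS (j c) a)))) b)); last first.
  by move=> a b; exact: inner_io.
have -> : tlift (fun a b => io (mS x (ph (eS (mS (j c) a)))) b) (DS s) =
          tlift (fun a b => io (mS x (ph (eS a))) b) (tlact mS (j c) (DS s)).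
  by rewrite tlift_tlact.
by rewrite -HDl io_counit.
Qed.

Let rr_bal s : balanced raS la (fun x c => io x (mS (j c) s)).
Proof.
apply: mkbal => [x c c'|c x x'|x a c]; first by rewrite Hj (rDl HS) io_addr.
  exact: io_addl.
by rewrite HraS io_mid Hjl mSA.
Qed.

Lemma mT_phT_r t s : mT t (phT s) = tlift (fun x c => io x (mS (j c) s)) t.
Proof.
move: t; apply: tensor_ext; first exact: mT_addl.
  exact: (tlift_additive (rr_bal s)).
by move=> x c; rewrite mT_phT_r_tmk tlift_tmk.
Qed.

Lemma mT_io_phT x z y : mT (io x z) (phT y) = io x (mS z y).
Proof.
move: z; apply: S_ext.
- by move=> a b; rewrite io_addr mT_addl.
- by move=> a b; rewrite (rDl HS) io_addr.
by move=> r c; rewrite io_gen mT_phT_r_tmk io_mid mSA.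
Qed.

Definition oT := phT oS.

Lemma mTA : associative mT.
Proof.
move=> t1 t2 t3; move: t1; apply: tensor_ext.
- by move=> x y /=; rewrite !mT_addl.
- by move=> x y /=; rewrite !mT_addl.
move=> s c; move: t2; apply: tensor_ext.
- by move=> x y /=; rewrite ?mT_addl ?mT_addr ?mT_addl.
- by move=> x y /=; rewrite ?mT_addl ?mT_addr ?mT_addl.
move=> s' c'; move: t3; apply: tensor_ext.
- by move=> x y /=; rewrite ?mT_addr.
- by move=> x y /=; rewrite ?mT_addr.
move=> s'' c''; rewrite !mT_tmk'; congr tmk.
by rewrite mSA eSr phM mSA.
Qed.

Lemma mT1l t : mT oT t = t.
Proof.
rewrite /oT mT_phT_l /tlact -[RHS]tlift_tmkE; apply: tlift_ext => m n.
by rewrite (r1l HS).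
Qed.

Lemma mT1r t : mT t oT = t.
Proof.
rewrite /oT mT_phT_r -[RHS]tlift_tmkE; apply: tlift_ext => x c.
by rewrite (r1r HS) io_j.
Qed.

Lemma HT : is_ring mT oT.
Proof.
split; [exact: mTA | exact: mT1l | exact: mT1r | | ].
  by move=> x y z; rewrite mT_addl.
by move=> x y z; rewrite mT_addr.
Qed.

Lemma phT_hom : is_rhom mS oS mT oT phT.
Proof.
split; [exact: phT_add | | by []].
move=> s s'; rewrite mT_phT_l /phT HDl tlift_tlact //.
rewrite (tlift_ext (g := fun a b => tlact mS s (io a b))); last by move=> a b; rewrite io_l.
by rewrite -(tlift_comp (tlact_add (mSadr s) (raS_comm s))).
Qed.

Lemma raT_eq t a : tract ra t a = mT t (phT (ph (th a))).
Proof. by rewrite mT_phT_r /tract; apply: tlift_ext => x c; rewrite -Hjr io_j. Qed.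

Definition eT (t : T) : S := tlift (fun s c => mS s (j c)) t.

Let eT_bal : balanced raS la (fun s c => mS s (j c)).
Proof.
apply: mkbal => [s c c'|c s s'|s a c]; first by rewrite Hj (rDr HS).
  by rewrite (rDl HS).
by rewrite HraS Hjl mSA.
Qed.

Lemma eT_tmk s c : eT (tmkT s c) = mS s (j c).
Proof. by rewrite /eT tlift_tmk. Qed.

Lemma eT_add : additive eT.
Proof. exact: (tlift_additive eT_bal). Qed.

Lemma eT_io x y : eT (io x y) = mS x y.
Proof.
move: y; apply: S_ext.
- by move=> a b; rewrite io_addr eT_add.
- exact: mSadr.
by move=> r c; rewrite io_gen eT_tmk mSA.
Qed.

Definition jT (c : C) : T := tmkT oS c.

Lemma lT_jT s c : mT (phT s) (jT c) = tmkT s c.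
Proof. by rewrite mT_phT_l (tlact_tmk (mSadr s) (raS_comm s)) (r1r HS). Qed.

Lemma jT_la a c : jT (la a c) = tmkT (ph (th a)) c.
Proof. by rewrite /jT -tmk_mid HraS (r1l HS). Qed.

Local Notation rT := (fun t s => mT t (phT s)).
Local Notation lT := (fun s t => mT (phT s) t).
Local Notation tmkTT := (@tmk S T T rT lT).

Lemma TT_mid u y v : tmkTT (mT u (phT y)) v = tmkTT u (mT (phT y) v).
Proof. exact: tmk_mid. Qed.

Definition DT (t : T) : tensor rT lT := tlift (fun s c => tmkTT (io s oS) (jT c)) t.

Let DT_bal : balanced raS la (fun s c => tmkTT (io s oS) (jT c)).
Proof.
apply: mkbal => [s c c'|c s s'|s a c]; first by rewrite /jT !tmkDr.
  by rewrite io_addl tmkDl.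
have e : mS (ph (th a)) oS = mS oS (ph (th a)) by rewrite (r1l HS) (r1r HS).
by rewrite HraS io_mid e -mT_io_phT TT_mid lT_jT jT_la.
Qed.

Lemma DT_tmk s c : DT (tmkT s c) = tmkTT (io s oS) (jT c).
Proof. by rewrite /DT tlift_tmk. Qed.

Lemma DT_add : additive DT.
Proof. exact: (tlift_additive DT_bal). Qed.

Lemma DT_io x y : DT (io x y) = tmkTT (io x oS) (io oS y).
Proof.
move: y; apply: S_ext.
- by move=> a b; rewrite io_addr DT_add.
- by move=> a b; rewrite io_addr tmkDr.
move=> r c; rewrite !io_gen DT_tmk.
have e : mS (ph r) oS = mS oS (ph r) by rewrite (r1l HS) (r1r HS).
by rewrite io_mid e -mT_io_phT TT_mid lT_jT (r1l HS).
Qed.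

Let lT_comm s m r : mT (phT s) (mT m (phT r)) = mT (mT (phT s) m) (phT r).
Proof. exact: mTA. Qed.
Let mT_comm t m r : mT t (mT m (phT r)) = mT (mT t m) (phT r).
Proof. exact: mTA. Qed.
Let rT_comm s r n : mT (phT r) (mT n (phT s)) = mT (mT (phT r) n) (phT s).
Proof. exact: mTA. Qed.
Let mT_commr t' r n : mT (phT r) (mT n t') = mT (mT (phT r) n) t'.
Proof. exact: mTA. Qed.

Lemma phTM a b : phT (mS a b) = mT (phT a) (phT b).
Proof. by case: phT_hom => _ h _; apply: h. Qed.

Lemma DT_l s t : DT (mT (phT s) t) = tlact lT s (DT t).
Proof.
move: t; apply: tensor_ext.
- by move=> x y /=; rewrite ?mT_addr ?DT_add.
- by move=> x y /=; rewrite DT_add (tlact_add (laM := lT) (mT_addr (phT s)) (lT_comm s)).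
move=> x c; rewrite mT_phT_l (tlact_tmk (mSadr s) (raS_comm s)) !DT_tmk.
by rewrite (tlact_tmk (laM := lT) (mT_addr (phT s)) (lT_comm s)) mT_phT_l io_l.
Qed.

Lemma DT_r t s : DT (mT t (phT s)) = tract rT (DT t) s.
Proof.
move: t; apply: tensor_ext.
- by move=> x y /=; rewrite ?mT_addl ?DT_add.
- by move=> x y /=; rewrite DT_add (tract_add (raN := rT) (mT_addl (phT s)) (rT_comm s)).
move=> x c; rewrite mT_phT_r_tmk DT_io DT_tmk.
by rewrite (tract_tmk (raN := rT) (mT_addl (phT s)) (rT_comm s)) /jT mT_phT_r_tmk.
Qed.

Lemma eT_l s t : eT (mT (phT s) t) = mS s (eT t).
Proof.
move: t; apply: tensor_ext.
- by move=> x y /=; rewrite ?mT_addr ?eT_add.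
- by move=> x y /=; rewrite eT_add (rDr HS).
move=> x c; rewrite mT_phT_l (tlact_tmk (mSadr s) (raS_comm s)) !eT_tmk.
by rewrite mSA.
Qed.

Lemma eT_r t s : eT (mT t (phT s)) = mS (eT t) s.
Proof.
move: t; apply: tensor_ext.
- by move=> x y /=; rewrite ?mT_addl ?eT_add.
- by move=> x y /=; rewrite eT_add (rDl HS).
by move=> x c; rewrite mT_phT_r_tmk eT_io eT_tmk mSA.
Qed.

Local Notation tmk3 := (@tmk S T (tensor rT lT) rT (tlact (ra:=rT) (la:=lT) lT)).

Let H3 (c2 : T) := fun a b : T => tmk3 a (tmkTT b c2).

Let H3bal c2 : balanced rT lT (H3 c2).
Proof.
apply: mkbal => [a b b'|b a a'|a r b].
- by rewrite /H3 tmkDl tmkDr.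
- by rewrite /H3 tmkDl.
rewrite /H3 /= tmk_mid.
by rewrite (tlact_tmk (laM := lT) (mT_addr (phT r)) (lT_comm r)).
Qed.

Let F3 (c1 c2 : T) := tlift (H3 c2) (DT c1).

Let F3bal : balanced rT lT F3.
Proof.
apply: mkbal => [c1 x y|c2 x y|c1 s c2].
- rewrite /F3 -tlift_addf; apply: tlift_ext => a b.
  by rewrite /H3 tmkDr tmkDr.
- by rewrite /F3 DT_add (tlift_additive (H3bal c2)).
rewrite /F3 /= DT_r tlift_tract //; apply: tlift_ext => a b.
by rewrite /H3 TT_mid.
Qed.

Let G3 (c1 c2 : T) := tmk3 c1 (DT c2).

Let G3bal : balanced rT lT G3.
Proof.
apply: mkbal => [c1 x y|c2 x y|c1 s c2].
- by rewrite /G3 DT_add tmkDr.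
- by rewrite /G3 tmkDl.
by rewrite /G3 /= tmk_mid DT_l.
Qed.

Lemma DT_coass t : tlift F3 (DT t) = tlift G3 (DT t).
Proof.
move: t; apply: tensor_ext.
- by move=> x y; rewrite DT_add (tlift_additive F3bal).
- by move=> x y; rewrite DT_add (tlift_additive G3bal).
move=> x c; rewrite DT_tmk (tlift_tmk F3bal) (tlift_tmk G3bal) /F3 /G3 DT_io.
by rewrite (tlift_tmk (H3bal _)) /H3 /jT DT_tmk.
Qed.

Let K1 (c1 c2 : T) := mT (phT (eT c1)) c2.
Let K1bal : balanced rT lT K1.
Proof.
apply: mkbal => [c1 x y|c2 x y|c1 s c2].
- by rewrite /K1 mT_addr.
- by rewrite /K1 eT_add phT_add mT_addl.
by rewrite /K1 /= eT_r phTM mTA.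
Qed.

Let K2 (c1 c2 : T) := mT c1 (phT (eT c2)).
Let K2bal : balanced rT lT K2.
Proof.
apply: mkbal => [c1 x y|c2 x y|c1 s c2].
- by rewrite /K2 eT_add phT_add mT_addr.
- by rewrite /K2 mT_addl.
by rewrite /K2 /= eT_l phTM mTA.
Qed.

Lemma DT_counit t : tlift K1 (DT t) = t /\ tlift K2 (DT t) = t.
Proof.
split; move: t; apply: tensor_ext => //.
- by move=> x y; rewrite DT_add (tlift_additive K1bal).
- move=> x c; rewrite DT_tmk (tlift_tmk K1bal) /K1 eT_io (r1r HS) lT_jT //.
- by move=> x y; rewrite DT_add (tlift_additive K2bal).
move=> x c; rewrite DT_tmk (tlift_tmk K2bal) /K2 mT_io_phT /jT eT_tmk.
by rewrite !(r1l HS) io_j.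
Qed.

Lemma mT_jT_tmk c x' c' : mT (jT c) (tmkT x' c') = tmkT (ph (eS (mS (j c) x'))) c'.
Proof. by rewrite /jT mT_tmk' (r1l HS). Qed.

Lemma DT_mT_l t t' : DT (mT t t') = tlact mT t (DT t').
Proof.
move: t; apply: tensor_ext.
- by move=> x y /=; rewrite ?mT_addl ?DT_add.
- by apply: tlact_addl => m; exact: mT_addl.
move=> x c; move: t'; apply: tensor_ext.
- by move=> x' y' /=; rewrite ?mT_addr ?DT_add.
- by move=> x' y' /=; rewrite DT_add (tlact_add (laM := mT) (mT_addr _) (mT_comm _)).
move=> x' c'; rewrite mT_tmk' !DT_tmk.
by rewrite (tlact_tmk (laM := mT) (mT_addr _) (mT_comm _)) mT_tmkl inner_io.
Qed.

Lemma DT_mT_r t t' : DT (mT t t') = tract mT (DT t) t'.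
Proof.
move: t; apply: tensor_ext.
- by move=> x y /=; rewrite ?mT_addl ?DT_add.
- by move=> x y /=; rewrite DT_add (tract_add (raN := mT) (mT_addl t') (mT_commr t')).
move=> x c; move: t'; apply: tensor_ext.
- by move=> x' y' /=; rewrite ?mT_addr ?DT_add.
- by apply: tract_addr => n; exact: mT_addr.
move=> x' c'; rewrite mT_tmk' !DT_tmk.
rewrite (tract_tmk (raN := mT) (mT_addl _) (mT_commr _)) mT_jT_tmk.
rewrite io_mid (r1r HS) -lT_jT -TT_mid mT_io_phT (r1l HS) //.
Qed.

Lemma HcorT : is_coring mS oS DT eT.
Proof.
split.
- exact: rhom_bimod HS HT phT_hom.
- by split; [exact: DT_add | exact: DT_l | exact: DT_r].
- by split; [exact: eT_add | exact: eT_l | exact: eT_r].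
- exact: DT_coass.
- exact: DT_counit.
Qed.

Lemma jT_add : additive jT.
Proof. by move=> x y; rewrite /jT tmkDr. Qed.

Lemma jT_l a c : jT (la a c) = mT (phT (ph (th a))) (jT c).
Proof. by rewrite lT_jT jT_la. Qed.

Lemma jT_r c a : jT (ra c a) = mT (jT c) (phT (ph (th a))).
Proof. by rewrite {2}/jT mT_phT_r_tmk -Hjr io_j. Qed.

Lemma recT t : tlift (fun s c => mT (phT s) (jT c)) t = t.
Proof. by rewrite -[RHS]tlift_tmkE; apply: tlift_ext => s c; rewrite lT_jT. Qed.

Lemma step_ok : @Inv A C la ra S T mS oS mT oT phT (fun a => ph (th a)) raS (tract ra) DT eT jT
  (fun t : T => t).
Proof.
split.
- exact: HS.
- exact: HT.
- exact: phT_hom.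
- exact: rhom_comp Hth Hph.
- exact: HraS.
- exact: raT_eq.
- exact: HcorT.
- exact: DT_mT_l.
- exact: DT_mT_r.
- exact: jT_add.
- exact: jT_l.
- exact: jT_r.
- by [].
- exact: recT.
- exact: lT_jT.
Qed.

End Step.

Section Step2.
Context (A : pzRingType) (C : zmodType) (la : A -> C -> C) (ra : C -> A -> C).
Context (R S : zmodType) (mR : R -> R -> R) (oR : R) (mS : S -> S -> S) (oS : S)
  (ph : R -> S) (th : A -> R) (raR : R -> A -> R) (raS : S -> A -> S).
Context (DS : S -> tensor (fun s r => mS s (ph r)) (fun r s => mS (ph r) s)) (eS : S -> R)
  (j : C -> S) (dec : S -> tensor raR la).
Hypothesis I : @Inv A C la ra R S mR oR mS oS ph th raR raS DS eS j dec.

Lemma inv_next : @Inv A C la ra S (tensor raS la) mS oS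
  (@mT A C la R S mS ph raS eS j) (@oT A C la R S mS oS ph raR raS DS dec)
  (@phT A C la R S mS ph raR raS DS dec) (fun a => ph (th a)) raS (tract ra)
  (@DT A C la R S mS oS ph raR raS DS eS j dec) (@eT A C la S mS raS j) (@jT A C la S oS raS)
  (fun t => t).
Proof.
case: I => HR HS Hph Hth HraR HraS Hcor HDl HDr Hj Hjl Hjr Hdec Hrec Hdecg.
exact: (step_ok HS Hph Hth HraR HraS Hcor HDl HDr Hj Hjl Hjr Hdec Hrec Hdecg).
Qed.

Lemma phT2_tmk s c :
  @phT A C la S (tensor raS la) (@mT A C la R S mS ph raS eS j)
    (@phT A C la R S mS ph raR raS DS dec) raS (tract ra)
    (@DT A C la R S mS oS ph raR raS DS eS j dec) (fun t => t) (tmk (ra:=raS) (la:=la) s c)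
  = tmk (ra:=tract ra) (la:=la) (@io A C la R S mS ph raR raS dec s oS) c.
Proof.
have I2 := inv_next.
unfold phT at 1.
rewrite (DT_tmk (i_HS I) (i_Hph I) (i_HraR I) (i_HraS I) (i_Hcor I) (i_HDl I) (i_HDr I)
  (i_Hj I) (i_Hjl I) (i_Hdec I) (i_Hrec I) (i_Hdecg I)).
rewrite (tlift_tmk (io_balS' (i_HS I2) (i_Hph I2) (i_HraR I2) (i_HraS I2) (i_Hdec I2)
  (i_Hrec I2) (i_Hdecg I2))).
exact: (io_j (i_HS I2) (i_Hph I2) (i_HraR I2) (i_HraS I2) (i_Hdecg I2)).
Qed.

End Step2.

Section FrobExt.
Context (R S : zmodType) (mR : R -> R -> R) (oR : R) (mS : S -> S -> S) (oS : S)
  (ph : R -> S).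
Local Notation rS := (fun s r => mS s (ph r)).
Local Notation lS := (fun r s => mS (ph r) s).
Context (DS : S -> tensor rS lS) (eS : S -> R).
Hypotheses (HR : is_ring mR oR) (HS : is_ring mS oS) (Hph : is_rhom mR oR mS oS ph)
  (Hcor : is_coring mR oR DS eS)
  (HDl : forall s s', DS (mS s s') = tlact mS s (DS s'))
  (HDr : forall s s', DS (mS s s') = tract mS (DS s) s').

Let mSA := rA HS.
Let phA : additive ph. Proof. by case: Hph => h _ _. Qed.
Let phM x y : ph (mR x y) = mS (ph x) (ph y). Proof. by case: Hph => _ h _. Qed.
Let eSA : additive eS. Proof. by case: Hcor => _ _ [h _ _]. Qed.
Let eSl r s : eS (mS (ph r) s) = mR r (eS s). Proof. by case: Hcor => _ _ [_ h _] _ _; apply: h. Qed.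
Let eSr s r : eS (mS s (ph r)) = mR (eS s) r. Proof. by case: Hcor => _ _ [_ _ h] _ _; apply: h. Qed.
Let cuL s : tlift (fun c1 c2 => mS (ph (eS c1)) c2) (DS s) = s.
Proof. by case: Hcor => _ _ _ _ h; case: (h s). Qed.
Let cuR s : tlift (fun c1 c2 => mS c1 (ph (eS c2))) (DS s) = s.
Proof. by case: Hcor => _ _ _ _ h; case: (h s). Qed.

Let F1_bal : balanced rS lS (fun a b => mS a (ph (eS b))).
Proof.
apply: mkbal => [a b b'|b a a'|a r b]; first by rewrite eSA phA (rDr HS).
  by rewrite (rDl HS).
by rewrite /= eSl phM !mSA.
Qed.

Lemma dual_basis s : tlift (fun a b => mS a (ph (eS (mS b s)))) (DS oS) = s.
Proof.
have -> : tlift (fun a b => mS a (ph (eS (mS b s)))) (DS oS) =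
          tlift (fun a b => mS a (ph (eS b))) (tract mS (DS oS) s) by rewrite tlift_tract.
by rewrite -HDr (r1l HS) cuR.
Qed.

Lemma recon s : tlift (fun a b => mS (ph (eS (mS s a))) b) (DS oS) = s.
Proof.
have -> : tlift (fun a b => mS (ph (eS (mS s a))) b) (DS oS) =
          tlift (fun c1 c2 => mS (ph (eS c1)) c2) (tlact mS s (DS oS)).
  rewrite tlift_tlact //; apply: mkbal => [a b b'|b a a'|a r b].
  - by rewrite (rDr HS).
  - by rewrite eSA phA (rDl HS).
  by rewrite /= eSr phM mSA.
by rewrite -HDl (r1r HS) cuL.
Qed.

Lemma frob_ext : frobenius_extension mR oR mS oS ph.
Proof.
split.
  pose l := trepr (DS oS); pose n := size l.
  pose b i := nth (0, 0) l i.
  exists n, (fun s (i : 'I_n) => eS (mS (b i).2 s)),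
    (fun v => \sum_(i < n) mS (b i).1 (ph (v i))); split.
  - by move=> s s' i; rewrite (rDr HS) eSA.
  - by move=> s r i; rewrite mSA eSr.
  - by move=> v w; rewrite -big_split /=; apply: eq_bigr => i _; rewrite phA (rDr HS).
  - move=> v r; rewrite (additive_sum _ _ (radl HS (ph r))).
    by apply: eq_bigr => i _; rewrite phM mSA.
  move=> s; rewrite -[RHS](dual_basis s) /tlift -/l.
  rewrite (big_nth (0, 0)) big_mkord; apply: eq_bigr => i _.
  by [].
exists (fun s x => eS (mS s x)); split.
- by move=> s; split; [move=> x y; rewrite (rDr HS) eSA | move=> x r; rewrite mSA eSr].
- by move=> s s'; apply: funext => x; rewrite (rDl HS) eSA.
- move=> s s' e; rewrite -(recon s) -(recon s').
  by apply: tlift_ext => a b; rewrite (congr1 (fun f => f a) e).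
- move=> g gA gl; exists (tlift (fun a b => mS (ph (g a)) b) (DS oS)).
  apply: funext => x.
  have hA : additive (fun y => eS (mS y x)) by move=> y z; rewrite (rDl HS) eSA.
  rewrite (tlift_comp hA).
  rewrite (tlift_ext (g := fun a b => g (mS a (ph (eS (mS b x)))))); last first.
    by move=> a b /=; rewrite -mSA eSl gl.
  by rewrite -(tlift_comp gA) dual_basis.
split.
  by move=> r s; apply: funext => x; rewrite -mSA eSl.
by move=> s s'; apply: funext => x; rewrite mSA.
Qed.

End FrobExt.

Section RmodFacts.
Context (R : zmodType) (mR : R -> R -> R) (oR : R) (M : zmodType) (act : M -> R -> M).
Hypothesis H : is_rmod mR oR act.
Lemma rmDr m r s : act m (r + s) = act m r + act m s. Proof. by case: H => h _ _ _; apply: h. Qed.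
Lemma rmDl m m' r : act (m + m') r = act m r + act m' r. Proof. by case: H => _ h _ _; apply: h. Qed.
Lemma rmA m r s : act (act m r) s = act m (mR r s). Proof. by case: H => _ _ h _; apply: h. Qed.
Lemma rm1 m : act m oR = m. Proof. by case: H => _ _ _ h; apply: h. Qed.
Lemma rmaddl r : additive (act ^~ r). Proof. by move=> x y; rewrite rmDl. Qed.
Lemma rmaddr m : additive (act m). Proof. by move=> x y; rewrite rmDr. Qed.
End RmodFacts.

Section LmodFacts.
Context (R : zmodType) (mR : R -> R -> R) (oR : R) (M : zmodType) (act : R -> M -> M).
Hypothesis H : is_lmod mR oR act.
Lemma lmDl r s m : act (r + s) m = act r m + act s m. Proof. by case: H => h _ _ _; apply: h. Qed.
Lemma lmDr r m m' : act r (m + m') = act r m + act r m'. Proof. by case: H => _ h _ _; apply: h. Qed.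
Lemma lmA r s m : act r (act s m) = act (mR r s) m. Proof. by case: H => _ _ h _; apply: h. Qed.
Lemma lm1 m : act oR m = m. Proof. by case: H => _ _ _ h; apply: h. Qed.
Lemma lmaddr r : additive (act r). Proof. by move=> x y; rewrite lmDr. Qed.
End LmodFacts.

Section FrobCor.
Context (R : zmodType) (mR : R -> R -> R) (oR : R) (D : zmodType)
  (la : R -> D -> D) (ra : D -> R -> D) (Delta : D -> tensor ra la) (eps : D -> R)
  (pi : tensor ra la -> D) (e : D).
Hypotheses (HR : is_ring mR oR) (Hcor : is_coring mR oR Delta eps)
  (Hfs : frobenius_system Delta pi e).

Let Hbim : is_bimod mR oR la ra. Proof. by case: Hcor. Qed.
Let Hl : is_lmod mR oR la. Proof. by case: Hbim. Qed.
Let Hr : is_rmod mR oR ra. Proof. by case: Hbim. Qed.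
Let lr_comm r d s : la r (ra d s) = ra (la r d) s. Proof. by case: Hbim => _ _ h; rewrite h. Qed.
Let DA : additive Delta. Proof. by case: Hcor => _ [h _ _]. Qed.
Let Dl r c : Delta (la r c) = tlact la r (Delta c). Proof. by case: Hcor => _ [_ h _] _ _ _; apply: h. Qed.
Let Dr c r : Delta (ra c r) = tract ra (Delta c) r. Proof. by case: Hcor => _ [_ _ h] _ _ _; apply: h. Qed.
Let epsA : additive eps. Proof. by case: Hcor => _ _ [h _ _]. Qed.
Let epsl r c : eps (la r c) = mR r (eps c). Proof. by case: Hcor => _ _ [_ h _] _ _; apply: h. Qed.
Let epsr c r : eps (ra c r) = mR (eps c) r. Proof. by case: Hcor => _ _ [_ _ h] _ _; apply: h. Qed.
Let coassD c :
  tlift (fun c1 c2 => tlift (fun a b => tmk (ra:=ra) (la:=tlact la) a (tmk b c2)) (Delta c1)) (Delta c)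
  = tlift (fun c1 c2 => tmk (ra:=ra) (la:=tlact la) c1 (Delta c2)) (Delta c).
Proof. by case: Hcor => _ _ _ h _; apply: h. Qed.
Let cuL c : tlift (fun c1 c2 => la (eps c1) c2) (Delta c) = c.
Proof. by case: Hcor => _ _ _ _ h; case: (h c). Qed.
Let cuR c : tlift (fun c1 c2 => ra c1 (eps c2)) (Delta c) = c.
Proof. by case: Hcor => _ _ _ _ h; case: (h c). Qed.
Let fe r : la r e = ra e r. Proof. by case: Hfs. Qed.
Let piA : additive pi. Proof. by case: Hfs => _ [h _ _]. Qed.
Let pil r x : pi (tlact la r x) = la r (pi x). Proof. by case: Hfs => _ [_ h _] _ _ _; apply: h. Qed.
Let pir x r : pi (tract ra x r) = ra (pi x) r. Proof. by case: Hfs => _ [_ _ h] _ _ _; apply: h. Qed.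
Let fs3 c c' : tlift (fun c1 c2 => tmk c1 (pi (tmk c2 c'))) (Delta c) = Delta (pi (tmk c c')).
Proof. by case: Hfs => _ _ h _ _; apply: h. Qed.
Let fs4 c c' : Delta (pi (tmk c c')) = tlift (fun d1 d2 => tmk (pi (tmk c d1)) d2) (Delta c').
Proof. by case: Hfs => _ _ _ h _; apply: h. Qed.
Let pie c : pi (tmk c e) = c. Proof. by case: Hfs => _ _ _ _ h; case: (h c). Qed.
Let pie' c : pi (tmk e c) = c. Proof. by case: Hfs => _ _ _ _ h; case: (h c). Qed.

Let raaddl r : additive (ra ^~ r). Proof. exact: (rmaddl Hr r). Qed.
Let laaddr r : additive (la r). Proof. exact: (lmaddr Hl r). Qed.

Local Notation rmod := (rmodule mR oR).
Local Notation act N := (@rm_act _ mR oR N).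

Section G.
Variable N : rmod.
Let HN : is_rmod mR oR (act N) := rm_ax N.

Definition Gcar : zmodType := (tensor (act N) la : zmodType).
Local Notation tmkN := (@tmk R N D (act N) la).
Definition Gact : Gcar -> R -> Gcar := tract (ra:=act N) (la:=la) ra.
Local Notation tmkG := (@tmk R Gcar D Gact la).

Lemma Gact_tmk n d r : Gact (tmkN n d) r = tmkN n (ra d r).
Proof. exact: (tract_tmk (raaddl r) (fun r' n => lr_comm r' n r)). Qed.

Lemma Gact_add r : additive (Gact ^~ r).
Proof. exact: (tract_add (raaddl r) (fun r' n => lr_comm r' n r)). Qed.

Let inner (n : N) := fun d1 d2 : D => tmkG (tmkN n d1) d2.

Let inner_bal n : balanced ra la (inner n).
Proof.
apply: mkbal => [d1 x y|d2 x y|d1 r d2].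
- exact: tmkDr.
- by rewrite /inner tmkDr tmkDl.
by rewrite /inner -Gact_tmk tmk_mid.
Qed.

Definition Grho (x : Gcar) : tensor Gact la :=
  tlift (fun n d => tlift (inner n) (Delta d)) x.

Let outer_bal : balanced (act N) la (fun n d => tlift (inner n) (Delta d)).
Proof.
apply: mkbal => [n x y|d x y|n r d].
- by rewrite DA (tlift_additive (inner_bal n)).
- rewrite -tlift_addf; apply: tlift_ext => a b.
  by rewrite /inner tmkDl tmkDl.
rewrite Dl tlift_tlact //; apply: tlift_ext => a b.
by rewrite /inner tmk_mid.
Qed.

Lemma Grho_tmk n d : Grho (tmkN n d) = tlift (inner n) (Delta d).
Proof. by rewrite /Grho tlift_tmk. Qed.

Lemma Grho_add : additive Grho.
Proof. exact: (tlift_additive outer_bal). Qed.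

Lemma Grmod : is_rmod mR oR Gact.
Proof.
split.
- move=> x r s; rewrite /Gact /tract -tlift_addf; apply: tlift_ext => m n.
  by rewrite (rmDr Hr) tmkDr.
- by move=> x x' r; rewrite Gact_add.
- move=> x r s; move: x; apply: tensor_ext.
  + by move=> x y /=; rewrite !Gact_add.
  + exact: Gact_add.
  by move=> n d; rewrite !Gact_tmk (rmA Hr).
- move=> x; rewrite /Gact /tract -[RHS]tlift_tmkE; apply: tlift_ext => m n.
  by rewrite (rm1 Hr).
Qed.

Local Notation tmkD := (@tmk R D D ra la).
Local Notation tmk3 := (@tmk R Gcar (tensor ra la) Gact (tlact (ra:=ra) (la:=la) la)).

Let tract_out_add r : additive (fun x : tensor Gact la => tract (ra:=Gact) (la:=la) ra x r).
Proof. exact: (tract_add (raaddl r) (fun r' n => lr_comm r' n r)). Qed.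

Lemma Grho_r x r : Grho (Gact x r) = tract (ra:=Gact) (la:=la) ra (Grho x) r.
Proof.
move: x; apply: tensor_ext.
- by move=> x y /=; rewrite Gact_add Grho_add.
- by move=> x y /=; rewrite Grho_add tract_out_add.
move=> n d; rewrite Gact_tmk !Grho_tmk Dr tlift_tract //.
rewrite (tlift_comp (tract_out_add r)); apply: tlift_ext => a b.
by rewrite /inner (tract_tmk (raaddl r) (fun r' n => lr_comm r' n r)).
Qed.

Let Q (c : D) := fun (m' : Gcar) (c' : D) => tmk3 m' (tmkD c' c).

Let Qbal c : balanced Gact la (Q c).
Proof.
apply: mkbal => [m' x y|c' x y|m' r c'].
- by rewrite /Q tmkDl tmkDr.
- by rewrite /Q tmkDl.
by rewrite /Q tmk_mid (tlact_tmk (laaddr r) (fun m s => lr_comm r m s)).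
Qed.

Let F3 (m0 : Gcar) (c : D) := tlift (Q c) (Grho m0).

Let F3bal : balanced Gact la F3.
Proof.
apply: mkbal => [m0 x y|c x y|m0 r c].
- rewrite /F3 -tlift_addf; apply: tlift_ext => a b.
  by rewrite /Q tmkDr tmkDr.
- by rewrite /F3 Grho_add (tlift_additive (Qbal c)).
rewrite /F3 Grho_r tlift_tract //; apply: tlift_ext => a b.
by rewrite /Q tmk_mid.
Qed.

Let G3 (m0 : Gcar) (c : D) := tmk3 m0 (Delta c).

Let G3bal : balanced Gact la G3.
Proof.
apply: mkbal => [m0 x y|c x y|m0 r c].
- by rewrite /G3 DA tmkDr.
- by rewrite /G3 tmkDl.
by rewrite /G3 tmk_mid Dl.
Qed.

Let zf (n : N) := fun (a : D) (y : tensor ra la) => tmk3 (tmkN n a) y.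

Let zbal n : balanced ra (tlact (ra:=ra) (la:=la) la) (zf n).
Proof.
apply: mkbal => [a x y|y x x'|a r y].
- exact: tmkDr.
- by rewrite /zf tmkDr tmkDl.
by rewrite /zf -Gact_tmk tmk_mid.
Qed.

Lemma G_coass m : tlift F3 (Grho m) = tlift G3 (Grho m).
Proof.
move: m; apply: tensor_ext.
- by move=> x y; rewrite Grho_add (tlift_additive F3bal).
- by move=> x y; rewrite Grho_add (tlift_additive G3bal).
move=> n d; rewrite Grho_tmk (tlift_tlift F3bal) (tlift_tlift G3bal).
have zA := tlift_additive (zbal n).
transitivity (tlift (zf n)
  (tlift (fun c1 c2 => tlift (fun a b => tmk (ra:=ra) (la:=tlact la) a (tmkD b c2)) (Delta c1)) (Delta d))).
  rewrite (tlift_comp zA); apply: tlift_ext => a b.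
  rewrite /inner (tlift_tmk F3bal) /F3 Grho_tmk (tlift_tlift (Qbal b)) (tlift_comp zA).
  by apply: tlift_ext => a' b'; rewrite !tlift_tmk.
rewrite coassD (tlift_comp zA); apply: tlift_ext => a b.
by rewrite /inner (tlift_tmk G3bal) (tlift_tmk (zbal n)).
Qed.

Let K (m0 : Gcar) (c : D) := Gact m0 (eps c).

Let Kbal : balanced Gact la K.
Proof.
apply: mkbal => [m0 x y|c x y|m0 r c].
- by rewrite /K epsA (rmDr Grmod).
- exact: Gact_add.
by rewrite /K (rmA Grmod) epsl.
Qed.

Lemma G_counit m : tlift K (Grho m) = m.
Proof.
move: m; apply: tensor_ext => //.
- by move=> x y; rewrite Grho_add (tlift_additive Kbal).
move=> n d; rewrite Grho_tmk (tlift_tlift Kbal).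
rewrite (tlift_ext (g := fun a b => tmkN n (ra a (eps b)))); last first.
  by move=> a b; rewrite /inner (tlift_tmk Kbal) /K Gact_tmk.
by rewrite -(tlift_comp (h := tmkN n)) ?cuR // => x y; rewrite tmkDr.
Qed.

Lemma Gax : [/\ additive Grho,
  forall m r, Grho (Gact m r) = tract (ra:=Gact) (la:=la) ra (Grho m) r,
  forall m, tlift (fun m0 c => tlift (fun m' c' =>
      tmk (ra:=Gact) (la:=tlact la) m' (tmk c' c)) (Grho m0)) (Grho m)
    = tlift (fun m0 c => tmk (ra:=Gact) (la:=tlact la) m0 (Delta c)) (Grho m)
  & forall m, tlift (fun m0 c => Gact m0 (eps c)) (Grho m) = m].
Proof.
split; [exact: Grho_add | exact: Grho_r | exact: G_coass | exact: G_counit].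
Qed.

End G.

Definition Gco (N : rmod) : comodule mR oR Delta eps :=
  @Comodule _ _ _ _ _ _ Delta eps (Gcar N) (@Gact N) (@Grho N) (@Grmod N) (@Gax N).

Local Notation como := (comodule mR oR Delta eps).
Local Notation cact X := (@cm_act _ mR oR _ la ra Delta eps X).
Local Notation crho X := (@cm_rho _ mR oR _ la ra Delta eps X).

Section ComFacts.
Variable X : como.
Lemma X_rmod : is_rmod mR oR (cact X). Proof. exact: cm_rmod. Qed.
Lemma rhoA : additive (crho X). Proof. by case: (cm_ax X). Qed.
Lemma rho_r m r : crho X (cact X m r) = tract ra (crho X m) r.
Proof. by case: (cm_ax X) => _ h _ _; apply: h. Qed.
Lemma coassX m : tlift (fun m0 c => tlift (fun m' c' =>
      tmk (ra:=cact X) (la:=tlact la) m' (tmk c' c)) (crho X m0)) (crho X m)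
    = tlift (fun m0 c => tmk (ra:=cact X) (la:=tlact la) m0 (Delta c)) (crho X m).
Proof. by case: (cm_ax X) => _ _ h _; apply: h. Qed.
Lemma counitX m : tlift (fun m0 c => cact X m0 (eps c)) (crho X m) = m.
Proof. by case: (cm_ax X) => _ _ _ h; apply: h. Qed.
End ComFacts.

Definition Gm (N N' : rmod) (g : N -> N') : Gco N -> Gco N' :=
  tlift (fun n d => tmk (ra:=act N') (la:=la) (g n) d).

Lemma rhom_add (N N' : rmod) (g : N -> N') : rhom g -> additive g.
Proof. by case. Qed.
Lemma rhom_lin (N N' : rmod) (g : N -> N') : rhom g -> forall m r, g (act N m r) = act N' (g m) r.
Proof. by case. Qed.

Lemma tmkf_bal (M : zmodType) (actM : M -> R -> M) (N' : rmod) (g : M -> N') :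
  additive g -> (forall m r, g (actM m r) = act N' (g m) r) ->
  balanced actM la (fun n d => tmk (ra:=act N') (la:=la) (g n) d).
Proof.
move=> gA gl; apply: mkbal => [n x y|d x y|n r d]; first exact: tmkDr.
  by rewrite gA tmkDl.
by rewrite gl tmk_mid.
Qed.

Lemma Gm_tmk (N N' : rmod) (g : N -> N') n d : rhom g ->
  Gm g (tmk (ra:=act N) (la:=la) n d) = tmk (g n) d.
Proof. by case=> gA gl; rewrite /Gm tlift_tmk //; apply: tmkf_bal. Qed.

Lemma Gm_add (N N' : rmod) (g : N -> N') : rhom g -> additive (Gm g).
Proof. by case=> gA gl; apply: tlift_additive; apply: tmkf_bal. Qed.

Lemma Gm_lin (N N' : rmod) (g : N -> N') : rhom g -> forall m r,
  Gm g (Gact m r) = Gact (Gm g m) r.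
Proof.
move=> hg m r; move: m; apply: tensor_ext.
+ by move=> x y /=; rewrite Gact_add (Gm_add hg).
+ by move=> x y /=; rewrite (Gm_add hg) Gact_add.
by move=> n d /=; rewrite Gact_tmk !(Gm_tmk _ _ hg) Gact_tmk.
Qed.

Lemma Gm_chom (N N' : rmod) (g : N -> N') : rhom g -> chom (Gm g).
Proof.
move=> hg; split; first by split; [exact: Gm_add | exact: Gm_lin].
have b : balanced (Gact (N:=N)) la (fun m c => tmk (ra:=Gact (N:=N')) (la:=la) (Gm g m) c).
  apply: mkbal => [m x y|c x y|m r c]; first exact: tmkDr.
    by rewrite (Gm_add hg) tmkDl.
  by rewrite (Gm_lin hg) tmk_mid.
move=> x; move: x; apply: tensor_ext.
- by move=> x y /=; rewrite (Gm_add hg) Grho_add.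
- by move=> x y /=; rewrite Grho_add (tlift_additive b).
move=> n d /=; rewrite (Gm_tmk _ _ hg) !Grho_tmk (tlift_tlift b).
by apply: tlift_ext => a c; rewrite tlift_tmk // (Gm_tmk _ _ hg).
Qed.

Lemma Gm_id (N : rmod) : Gm (N:=N) id = id.
Proof. by apply: funext => x; rewrite /Gm tlift_tmkE. Qed.

Lemma Gm_comp (N N' N'' : rmod) (g : N -> N') (g' : N' -> N'') : rhom g -> rhom g' ->
  Gm (g' \o g) = Gm g' \o Gm g.
Proof.
move=> hg hg'; have hgg : rhom (N := N'') (g' \o g).
  split; first by move=> x y /=; rewrite (rhom_add hg) (rhom_add hg').
  by move=> m r /=; rewrite (rhom_lin hg) (rhom_lin hg').
apply: funext => x; move: x; apply: tensor_ext.
- exact: Gm_add.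
- by move=> x y /=; rewrite (Gm_add hg) (Gm_add hg').
by move=> n d /=; rewrite !Gm_tmk.
Qed.

Definition phiL (X : como) (N : rmod) (f : X -> N) : X -> Gco N :=
  fun x => tlift (fun m c => tmk (ra:=act N) (la:=la) (f m) c) (crho X x).
Definition psiL (X : como) (N : rmod) (g : X -> Gco N) : X -> N :=
  fun x => tlift (fun n d => act N n (eps d)) (g x).

Let Pbal (N : rmod) : balanced (act N) la (fun n d => act N n (eps d)).
Proof.
apply: mkbal => [n x y|d x y|n r d].
- by rewrite epsA (rmDr (rm_ax N)).
- by rewrite (rmDl (rm_ax N)).
by rewrite epsl (rmA (rm_ax N)).
Qed.

Lemma psi0_act (N : rmod) y r : tlift (fun n d => act N n (eps d)) (Gact y r) =
  act N (tlift (fun n d => act N n (eps d)) y) r.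
Proof.
rewrite /Gact tlift_tract //.
rewrite (tlift_comp (h := act N ^~ r)); last exact: rmaddl (rm_ax N) r.
by apply: tlift_ext => n d; rewrite epsr (rmA (rm_ax N)).
Qed.

Lemma fwd_left : forall X N f, rhom (M := forget X) f -> chom (phiL (X:=X) (N:=N) f).
Proof.
move=> X N f [fA fl].
have b : balanced (cact X) la (fun m c => tmk (ra:=act N) (la:=la) (f m) c).
  by apply: tmkf_bal.
have pA : additive (phiL (N:=N) f).
  by move=> x y; rewrite /phiL rhoA (tlift_additive b).
have pl : forall x r, phiL f (cact X x r) = Gact (phiL f x) r.
  move=> x r; rewrite /phiL rho_r tlift_tract //.
  rewrite (tlift_comp (Gact_add r)); apply: tlift_ext => m c.
  by rewrite Gact_tmk.
split; first by split.
move=> x.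
pose I (n : N) := fun d1 d2 : D => tmk (ra:=Gact (N:=N)) (la:=la) (tmk (ra:=act N) (la:=la) n d1) d2.
have Ib : forall n, balanced ra la (I n).
  move=> n; apply: mkbal => [d1 y z|d2 y z|d1 r d2].
  - exact: tmkDr.
  - by rewrite /I tmkDr tmkDl.
  by rewrite /I -Gact_tmk tmk_mid.
pose om := fun (m : X) (y : tensor ra la) => tlift (I (f m)) y.
have ob : balanced (cact X) (tlact (ra:=ra) (la:=la) la) om.
  apply: mkbal => [m y z|y m m'|m r y].
  - exact: (tlift_additive (Ib _)).
  - rewrite /om -tlift_addf; apply: tlift_ext => a c.
    by rewrite /I fA tmkDl tmkDl.
  rewrite /om tlift_tlact //; apply: tlift_ext => a c.
  by rewrite /I fl tmk_mid.
have oA := tlift_additive ob.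
transitivity (tlift om (tlift (fun m0 c => tmk (ra:=cact X) (la:=tlact la) m0 (Delta c)) (crho X x))).
  transitivity (Grho (phiL f x)); first by [].
  rewrite /phiL (tlift_comp (Grho_add (N:=N))) (tlift_comp oA).
  apply: tlift_ext => m c; rewrite Grho_tmk (tlift_tmk ob) //.
rewrite -coassX (tlift_comp oA); apply: tlift_ext => m0 c.
rewrite (tlift_comp oA) /phiL.
rewrite (tlift_comp (h := fun z => tmk (ra:=Gact (N:=N)) (la:=la) z c)); last by move=> y z; rewrite tmkDl.
by apply: tlift_ext => m' c'; rewrite (tlift_tmk ob) /om (tlift_tmk (Ib _)).
Qed.

Lemma chom_add (X Y : como) (g : X -> Y) : chom g -> additive g.
Proof. by case=> [[]]. Qed.
Lemma chom_lin (X Y : como) (g : X -> Y) : chom g -> forall m r, g (cact X m r) = cact Y (g m) r.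
Proof. by case=> [[]]. Qed.
Lemma chom_rho (X Y : como) (g : X -> Y) : chom g ->
  forall x, crho Y (g x) = tlift (fun m c => tmk (ra:=cact Y) (la:=la) (g m) c) (crho X x).
Proof. by case. Qed.

Lemma bwd_left : forall X N g, chom g -> rhom (M := forget X) (psiL (X:=X) (N:=N) g).
Proof.
move=> X N g hg; have gA := chom_add hg; have gl := chom_lin hg.
split.
  by move=> x y; rewrite /psiL gA (tlift_additive (Pbal N)).
move=> m r; rewrite /psiL /=.
have -> : g (cm_act m r) = Gact (g m) r by exact: gl.
exact: psi0_act.
Qed.

Lemma left_inv1 : forall X N f, rhom (M := forget X) f -> psiL (X:=X) (N:=N) (phiL f) = f.
Proof.
move=> X N f [fA fl]; apply: funext => x; rewrite /psiL /phiL.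
rewrite tlift_tlift //.
rewrite (tlift_ext (g := fun m c => f (cact X m (eps c)))); last first.
  by move=> m c; rewrite tlift_tmk // fl.
by rewrite -(tlift_comp fA) counitX.
Qed.

Lemma left_inv2 : forall X N g, chom g -> phiL (X:=X) (N:=N) (psiL g) = g.
Proof.
move=> X N g hg; apply: funext => x; rewrite /phiL /psiL.
pose p0 := fun y : Gco N => tlift (fun n d => act N n (eps d)) y.
have kb : balanced (Gact (N:=N)) la (fun y c => tmk (ra:=act N) (la:=la) (p0 y) c).
  apply: mkbal => [y a b|c a b|y r c]; first exact: tmkDr.
    by rewrite /p0 (tlift_additive (Pbal N)) tmkDl.
  by rewrite /p0 psi0_act tmk_mid.
have kA := tlift_additive kb.
rewrite (tlift_ext (g := fun m c => tlift (fun y c => tmk (ra:=act N) (la:=la) (p0 y) c)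
    (tmk (ra:=Gact (N:=N)) (la:=la) (g m) c))); last by move=> m c; rewrite tlift_tmk.
rewrite -(tlift_comp kA).
have -> : tlift (fun m c => tmk (ra:=Gact (N:=N)) (la:=la) (g m) c) (crho X x) = Grho (g x).
  by rewrite -(chom_rho hg).
rewrite /Grho (tlift_comp kA) -[RHS]tlift_tmkE; apply: tlift_ext => n d.
rewrite (tlift_comp kA).
rewrite (tlift_ext (g := fun d1 d2 => tmk (ra:=act N) (la:=la) n (la (eps d1) d2))); last first.
  by move=> d1 d2; rewrite tlift_tmk // /p0 tlift_tmk // tmk_mid.
rewrite -(tlift_comp (h := tmk (ra:=act N) (la:=la) n)); last by move=> a b; rewrite tmkDr.
by rewrite cuL.
Qed.

Lemma left_nat : forall (X X' : como) (N N' : rmod) (h : X' -> X) (f : X -> N) (g : N -> N'),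
  chom h -> rhom (M := forget X) f -> rhom g ->
  phiL (g \o f \o h) = Gm g \o phiL f \o h.
Proof.
move=> X X' N N' h f g hh [fA fl] hg; apply: funext => x /=.
rewrite /phiL (chom_rho hh) tlift_tlift; last by apply: tmkf_bal.
rewrite (tlift_comp (Gm_add hg)); apply: tlift_ext => m c.
by rewrite tlift_tmk ?(Gm_tmk _ _ hg) //; apply: tmkf_bal.
Qed.

Lemma left_adj : forget_left_adjoint (G := Gco) Gm.
Proof.
exists phiL, psiL; split.
- exact: fwd_left.
- exact: bwd_left.
- exact: left_inv1.
- exact: left_inv2.
- exact: left_nat.
Qed.

Definition Wf (X : como) (d : D) := fun (x0 : X) (x1 : D) => cact X x0 (eps (pi (tmk x1 d))).

Lemma Wbal (X : como) d : balanced (cact X) la (@Wf X d).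
Proof.
apply: mkbal => [x0 a b|x1 a b|x0 r x1].
- by rewrite /Wf tmkDl piA epsA (rmDr (X_rmod X)).
- by rewrite /Wf (rmDl (X_rmod X)).
rewrite /Wf (rmA (X_rmod X)); congr (cact X x0 _).
by rewrite -(tlact_tmk (laaddr r) (fun m s => lr_comm r m s)) pil epsl.
Qed.

Definition phiR (N : rmod) (X : como) (f : Gco N -> X) : N -> X :=
  fun n => f (tmk (ra:=act N) (la:=la) n e).
Definition Vf (N : rmod) (X : como) (g : N -> X) :=
  fun (n : N) (d : D) => tlift (@Wf X d) (crho X (g n)).
Definition psiR (N : rmod) (X : como) (g : N -> X) : Gco N -> X :=
  fun t => tlift (Vf g) t.

Lemma Vbal (N : rmod) (X : como) (g : N -> X) : rhom (N := forget X) g ->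
  balanced (act N) la (Vf g).
Proof.
move=> [gA gl]; apply: mkbal => [n a b|d a b|n r d].
- rewrite /Vf -tlift_addf; apply: tlift_ext => x0 x1.
  by rewrite /Wf tmkDr piA epsA (rmDr (X_rmod X)).
- by rewrite /Vf gA rhoA (tlift_additive (Wbal X d)).
rewrite /Vf gl /= rho_r tlift_tract; last exact: Wbal.
by apply: tlift_ext => x0 x1; rewrite /Wf tmk_mid.
Qed.

Let sig_f (d : D) := fun c c' : D => ra c (eps (pi (tmk c' d))).
Let sig_bal d : balanced ra la (sig_f d).
Proof.
apply: mkbal => [c a b|c' a b|c r c'].
- by rewrite /sig_f tmkDl piA epsA (rmDr Hr).
- by rewrite /sig_f (rmDl Hr).
rewrite /sig_f (rmA Hr); congr (ra c _).
by rewrite -(tlact_tmk (laaddr r) (fun m s => lr_comm r m s)) pil epsl.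
Qed.

Let Lbal : balanced ra la (fun a b => la (eps a) b).
Proof.
apply: mkbal => [a x y|b x y|a r b]; first exact: laaddr.
  by rewrite epsA (lmDl Hl).
by rewrite epsr (lmA Hl).
Qed.
Let Rbal : balanced ra la (fun a b => ra a (eps b)).
Proof.
apply: mkbal => [a x y|b x y|a r b]; first by rewrite epsA (rmDr Hr).
  by rewrite (rmDl Hr).
by rewrite epsl (rmA Hr).
Qed.

Lemma sig_Delta d c : tlift (sig_f d) (Delta c) = pi (tmk c d).
Proof.
rewrite -[RHS](cuR (pi (tmk c d))) -fs3 tlift_tlift //.
by apply: tlift_ext => a b; rewrite tlift_tmk.
Qed.

Lemma key1 (X : como) d (y : X) :
  crho X (tlift (@Wf X d) (crho X y)) = tlift (fun m0 c => tmk (ra:=cact X) (la:=la) m0 (pi (tmk c d))) (crho X y).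
Proof.
pose chi := fun (m : X) (z : tensor ra la) => tmk (ra:=cact X) (la:=la) m (tlift (sig_f d) z).
have cb : balanced (cact X) (tlact (ra:=ra) (la:=la) la) chi.
  apply: mkbal => [m a b|z a b|m r z].
  - by rewrite /chi (tlift_additive (sig_bal d)) tmkDr.
  - by rewrite /chi tmkDl.
  rewrite /chi tmk_mid tlift_tlact //; congr tmk.
  rewrite (tlift_comp (laaddr r)); apply: tlift_ext => a b.
  by rewrite /sig_f lr_comm.
have cA := tlift_additive cb.
transitivity (tlift chi (tlift (fun m0 c => tlift (fun m' c' =>
      tmk (ra:=cact X) (la:=tlact la) m' (tmk c' c)) (crho X m0)) (crho X y))).
  rewrite (tlift_comp (@rhoA X)) (tlift_comp cA); apply: tlift_ext => x0 x1.
  rewrite /Wf rho_r (tlift_comp cA) /tract; apply: tlift_ext => m' c'.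
  by rewrite (tlift_tmk cb) /chi tlift_tmk.
rewrite coassX (tlift_comp cA); apply: tlift_ext => m0 c.
by rewrite (tlift_tmk cb) /chi sig_Delta.
Qed.

Lemma key2 (X : como) d (y : X) :
  tlift (fun d1 d2 => tmk (ra:=cact X) (la:=la) (tlift (@Wf X d1) (crho X y)) d2) (Delta d)
  = tlift (fun m0 c => tmk (ra:=cact X) (la:=la) m0 (pi (tmk c d))) (crho X y).
Proof.
rewrite (tlift_ext (g := fun d1 d2 => tlift (fun x0 x1 => tmk (ra:=cact X) (la:=la) (@Wf X d1 x0 x1) d2) (crho X y))); last first.
  by move=> d1 d2; rewrite (tlift_comp (h := fun z => tmk (ra:=cact X) (la:=la) z d2)) // => a b; rewrite tmkDl.
rewrite tlift_swap; apply: tlift_ext => x0 x1.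
rewrite (tlift_ext (g := fun d1 d2 => tmk (ra:=cact X) (la:=la) x0 (la (eps (pi (tmk x1 d1))) d2))); last first.
  by move=> d1 d2; rewrite /Wf tmk_mid.
rewrite -(tlift_comp (h := tmk (ra:=cact X) (la:=la) x0)); last by move=> a b; rewrite tmkDr.
congr tmk.
rewrite -[RHS]cuL fs4 tlift_tlift //; apply: tlift_ext => a b.
by rewrite tlift_tmk.
Qed.

Lemma cactG (N : rmod) t r : cact (Gco N) t r = Gact t r.
Proof. by []. Qed.

Lemma fwd_right : forall N X f, chom f -> rhom (N := forget X) (phiR (N:=N) (X:=X) f).
Proof.
move=> N X f hf; have fA := chom_add hf; have fl := chom_lin hf.
split; first by move=> x y; rewrite /phiR tmkDl fA.
move=> n r; rewrite /phiR /= tmk_mid fe -Gact_tmk.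
exact: fl.
Qed.

Lemma bwd_right : forall N X g, rhom (N := forget X) g -> chom (psiR (N:=N) (X:=X) g).
Proof.
move=> N X g hg; have vb := Vbal hg.
have pA : additive (psiR g) by move=> x y; rewrite /psiR (tlift_additive vb).
have pl : forall t r, psiR g (Gact t r) = cact X (psiR g t) r.
  move=> t r; rewrite /psiR /Gact tlift_tract //.
  rewrite (tlift_comp (h := cact X ^~ r)); last exact: (rmaddl (X_rmod X) r).
  apply: tlift_ext => n d; rewrite /Vf.
  rewrite (tlift_comp (h := cact X ^~ r)); last exact: (rmaddl (X_rmod X) r).
  apply: tlift_ext => x0 x1; rewrite /Wf (rmA (X_rmod X)).
  by rewrite -(tract_tmk (raaddl r) (fun r' n => lr_comm r' n r)) pir epsr.
split; first by split.
have tb : balanced (Gact (N:=N)) la (fun m c => tmk (ra:=cact X) (la:=la) (psiR g m) c).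
  apply: mkbal => [m a b|c a b|m r c]; first exact: tmkDr.
    by rewrite pA tmkDl.
  by rewrite pl tmk_mid.
move=> t; move: t; apply: tensor_ext.
- by move=> x y; rewrite pA rhoA.
- by move=> x y /=; rewrite (Grho_add (N:=N)) (tlift_additive tb).
move=> n d.
transitivity (crho X (Vf g n d)); first by rewrite /psiR tlift_tmk.
transitivity (tlift (fun m c => tmk (ra:=cact X) (la:=la) (psiR g m) c) (Grho (tmk (ra:=act N) (la:=la) n d))); last by [].
rewrite Grho_tmk (tlift_tlift tb).
rewrite (tlift_ext (g := fun a b => tmk (ra:=cact X) (la:=la) (tlift (@Wf X a) (crho X (g n))) b)); last first.
  by move=> a b; rewrite (tlift_tmk tb) /psiR (tlift_tmk vb).
by rewrite /Vf key1 key2.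
Qed.

Lemma right_inv1 : forall N X f, chom f -> psiR (phiR (N:=N) (X:=X) f) = f.
Proof.
move=> N X f hf; have fA := chom_add hf; have fl := chom_lin hf.
apply: funext => t; rewrite /psiR -{2}(tlift_tmkE t) (tlift_comp fA).
apply: tlift_ext => n d; rewrite /Vf /phiR (chom_rho hf).
have fb : balanced (Gact (N:=N)) la (fun m c => tmk (ra:=cact X) (la:=la) (f m) c).
  apply: mkbal => [m a b|c a b|m r c]; first exact: tmkDr.
    by rewrite fA tmkDl.
  by rewrite fl tmk_mid.
transitivity (tlift (Wf d) (tlift (fun m c => tmk (ra:=cact X) (la:=la) (f m) c)
   (Grho (tmk (ra:=act N) (la:=la) n e)))); first by [].
rewrite Grho_tmk (tlift_tlift fb) (tlift_tlift (Wbal X d)).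
rewrite (tlift_ext (g := fun a b => f (tmk (ra:=act N) (la:=la) n (sig_f d a b)))); last first.
  move=> a b; rewrite (tlift_tmk fb) (tlift_tmk (Wbal X d)) /Wf.
  by rewrite -fl cactG Gact_tmk.
rewrite -(tlift_comp (h := fun z => f (tmk (ra:=act N) (la:=la) n z))); last first.
  by move=> a b; rewrite tmkDr fA.
by rewrite sig_Delta pie'.
Qed.

Lemma right_inv2 : forall N X g, rhom (N := forget X) g -> phiR (psiR (N:=N) (X:=X) g) = g.
Proof.
move=> N X g hg; apply: funext => n; rewrite /phiR /psiR (tlift_tmk (Vbal hg)) /Vf.
rewrite -[RHS](counitX (g n)); apply: tlift_ext => x0 x1.
by rewrite /Wf pie.
Qed.

Lemma right_nat : forall (N N' : rmod) (X X' : como) (h : N' -> N) (f : Gco N -> X) (g : X -> X'),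
  rhom h -> chom f -> chom g ->
  phiR (g \o f \o Gm h) = g \o phiR f \o h.
Proof.
move=> N N' X X' h f g hh hf hg; apply: funext => n /=.
by rewrite /phiR /= (Gm_tmk _ _ hh).
Qed.

Lemma right_adj : forget_right_adjoint (G := Gco) Gm.
Proof.
exists phiR, psiR; split.
- exact: fwd_right.
- exact: bwd_right.
- exact: right_inv1.
- exact: right_inv2.
- exact: right_nat.
Qed.

Theorem frob_cor : frobenius_coring mR oR Delta eps.
Proof.
exists Gco, Gm; split.
- exact: Gm_chom.
- exact: Gm_id.
- exact: Gm_comp.
- exact: left_adj.
- exact: right_adj.
Qed.

End FrobCor.

Section Retype.
Context (R : Type) (M N : zmodType) (ra ra' : M -> R -> M) (la la' : R -> N -> N).
Hypotheses (E1 : ra' = ra) (E2 : la' = la).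

Lemma rt_id (x : tensor ra la) :
  tlift (fun a b => tmk (ra:=ra) (la:=la) a b) (tlift (fun a b => tmk (ra:=ra') (la:=la') a b) x) = x.
Proof. by move: E1 E2 => -> ->; rewrite !tlift_tmkE. Qed.

Lemma rt_tlact (S : Type) (laM : S -> M -> M) s (x : tensor ra la) :
  tlift (fun a b => tmk (ra:=ra') (la:=la') a b) (tlact (ra:=ra) (la:=la) laM s x)
  = tlact (ra:=ra') (la:=la') laM s (tlift (fun a b => tmk (ra:=ra') (la:=la') a b) x).
Proof. by move: E1 E2 => -> ->; rewrite !tlift_tmkE. Qed.

Lemma rt_tract (S : Type) (raN : N -> S -> N) s (x : tensor ra la) :
  tlift (fun a b => tmk (ra:=ra') (la:=la') a b) (tract (ra:=ra) (la:=la) raN x s)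
  = tract (ra:=ra') (la:=la') raN (tlift (fun a b => tmk (ra:=ra') (la:=la') a b) x) s.
Proof. by move: E1 E2 => -> ->; rewrite !tlift_tmkE. Qed.
End Retype.

Lemma coring_retype (R : zmodType) (mR : R -> R -> R) (oR : R) (C : zmodType)
  (la la' : R -> C -> C) (ra ra' : C -> R -> C) (Delta : C -> tensor ra la) (eps : C -> R) :
  ra' = ra -> la' = la -> is_coring mR oR Delta eps ->
  is_coring mR oR (fun c => tlift (fun a b => tmk (ra:=ra') (la:=la') a b) (Delta c)) eps.
Proof.
move=> -> -> h.
have -> : (fun c => tlift (fun a b => tmk (ra:=ra) (la:=la) a b) (Delta c)) = Delta.
  by apply: funext => c; rewrite tlift_tmkE.
exact: h.
Qed.

Section Glue.
Context (A : pzRingType) (C : zmodType) (la : A -> C -> C) (ra : C -> A -> C)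
  (R S : zmodType) (mR : R -> R -> R) (oR : R) (mS : S -> S -> S) (oS : S)
  (ph : R -> S) (th : A -> R) (raR : R -> A -> R) (raS : S -> A -> S)
  (DS : S -> tensor (fun s r => mS s (ph r)) (fun r s => mS (ph r) s)) (eS : S -> R)
  (j : C -> S) (dec : S -> tensor raR la).
Hypothesis I : @Inv A C la ra R S mR oR mS oS ph th raR raS DS eS j dec.

Lemma inv_fs : frobenius_system DS (tlift mS) oS.
Proof.
have HS := i_HS I; have mSA := rA HS.
have b : balanced (fun s r => mS s (ph r)) (fun r s => mS (ph r) s) mS.
  apply: mkbal => [s x y|s x y|s r s']; [exact: (rDr HS) | exact: (rDl HS) | by rewrite /= mSA].
split.
- by move=> r; rewrite (r1l HS) (r1r HS).
- split; first exact: tlift_additive b.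
    move=> r x; rewrite tlift_tlact // (tlift_comp (radr HS (ph r))).
    by apply: tlift_ext => m n; rewrite mSA.
  move=> x r; rewrite tlift_tract // (tlift_comp (radl HS (ph r))).
  by apply: tlift_ext => m n; rewrite mSA.
- move=> c c'; rewrite (tlift_tmk b) (i_HDr I) /tract.
  by apply: tlift_ext => m n; rewrite (tlift_tmk b).
- move=> c c'; rewrite (tlift_tmk b) (i_HDl I) /tlact.
  by apply: tlift_ext => m n; rewrite (tlift_tmk b).
- by move=> c; rewrite !(tlift_tmk b) (r1l HS) (r1r HS).
Qed.

Lemma inv_frob_ext : frobenius_extension mR oR mS oS ph.
Proof. exact: (frob_ext (i_HS I) (i_Hph I) (i_Hcor I) (i_HDl I) (i_HDr I)). Qed.

Lemma inv_frob_cor : frobenius_coring mR oR DS eS.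
Proof. exact: (frob_cor (i_Hcor I) inv_fs). Qed.

End Glue.

Section Tower.
Context (A : pzRingType) (C : zmodType) (la : A -> C -> C) (ra : C -> A -> C)
  (Delta : C -> tensor ra la) (eps : C -> A) (pi : tensor ra la -> C) (e : C).

Local Notation Cp := (Cpow la ra).

Definition raRk (k : nat) : Cp k -> A -> Cp k :=
  match k return Cp k -> A -> Cp k with
  | 0 => fun (r : A) (a : A) => r * a
  | k'.+1 => projT2 (Cpos la ra k')
  end.

Record Lvl (k : nat) := MkLvl {
  lmR : Cp k -> Cp k -> Cp k; loR : Cp k;
  lmS : Cp k.+1 -> Cp k.+1 -> Cp k.+1; loS : Cp k.+1;
  lph : Cp k -> Cp k.+1; lth : A -> Cp k;
  lDS : Cp k.+1 -> tensor (fun s r => lmS s (lph r)) (fun r s => lmS (lph r) s);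
  leS : Cp k.+1 -> Cp k;
  lj : C -> Cp k.+1;
  ldec : Cp k.+1 -> tensor (@raRk k) la }.

Definition mul0 (c c' : C) : C := pi (tmk c c').
Definition ph0 (a : A) : C := la a e.
Definition rt0 (x : tensor ra la) :=
  tlift (fun a b => tmk (ra:=fun s r => mul0 s (ph0 r)) (la:=fun r s => mul0 (ph0 r) s) a b) x.

Definition L0 : Lvl 0 :=
  @MkLvl 0 (fun r s : A => r * s) (1 : A) mul0 e ph0 (fun a => a)
    (fun c => rt0 (Delta c)) eps (fun c => c) (fun c => tmk (ra:=@raRk 0) (la:=la) (1 : A) c).

Definition step k (L : Lvl k) : Lvl k.+1 :=
  @MkLvl k.+1 (lmS L) (loS L)
    (@mT A C la (Cp k) (Cp k.+1) (lmS L) (lph L) (projT2 (Cpos la ra k)) (leS L) (lj L))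
    (@oT A C la (Cp k) (Cp k.+1) (lmS L) (loS L) (lph L) (@raRk k) (projT2 (Cpos la ra k)) (lDS L) (ldec L))
    (@phT A C la (Cp k) (Cp k.+1) (lmS L) (lph L) (@raRk k) (projT2 (Cpos la ra k)) (lDS L) (ldec L))
    (fun a => lph L (lth L a))
    (@DT A C la (Cp k) (Cp k.+1) (lmS L) (loS L) (lph L) (@raRk k) (projT2 (Cpos la ra k)) (lDS L) (leS L) (lj L) (ldec L))
    (@eT A C la (Cp k.+1) (lmS L) (projT2 (Cpos la ra k)) (lj L))
    (@jT A C la (Cp k.+1) (loS L) (projT2 (Cpos la ra k)))
    (fun t => t).

Fixpoint lvl (k : nat) : Lvl k :=
  match k with 0 => L0 | k'.+1 => step (lvl k') end.

Definition InvL k (L : Lvl k) : Prop :=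
  @Inv A C la ra (Cp k) (Cp k.+1) (lmR L) (loR L) (lmS L) (loS L) (lph L) (lth L)
    (@raRk k) (projT2 (Cpos la ra k)) (lDS L) (leS L) (lj L) (ldec L).

Lemma inv_step k (L : Lvl k) : InvL L -> InvL (step L).
Proof.
move=> I; exact: (inv_next I).
Qed.

Section Level0.
Hypotheses (Hcor : is_coring ( *%R) 1 Delta eps) (Hfs : frobenius_system Delta pi e).

Let Hbim : is_bimod ( *%R) 1 la ra. Proof. by case: Hcor. Qed.
Let Hl : is_lmod ( *%R) 1 la. Proof. by case: Hbim. Qed.
Let Hr : is_rmod ( *%R) 1 ra. Proof. by case: Hbim. Qed.
Let lr_comm r d s : la r (ra d s) = ra (la r d) s. Proof. by case: Hbim => _ _ h; rewrite h. Qed.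
Let epsA : additive eps. Proof. by case: Hcor => _ _ [h _ _]. Qed.
Let epsl r c : eps (la r c) = r * eps c. Proof. by case: Hcor => _ _ [_ h _] _ _; apply: h. Qed.
Let epsr c r : eps (ra c r) = eps c * r. Proof. by case: Hcor => _ _ [_ _ h] _ _; apply: h. Qed.
Let cuR c : tlift (fun c1 c2 => ra c1 (eps c2)) (Delta c) = c.
Proof. by case: Hcor => _ _ _ _ h; case: (h c). Qed.
Let fe r : la r e = ra e r. Proof. by case: Hfs. Qed.
Let piA : additive pi. Proof. by case: Hfs => _ [h _ _]. Qed.
Let pil r x : pi (tlact la r x) = la r (pi x). Proof. by case: Hfs => _ [_ h _] _ _ _; apply: h. Qed.
Let pir x r : pi (tract ra x r) = ra (pi x) r. Proof. by case: Hfs => _ [_ _ h] _ _ _; apply: h. Qed.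
Let fs3 c c' : Delta (mul0 c c') = tract (ra:=ra) (la:=la) mul0 (Delta c) c'.
Proof. by case: Hfs => _ _ h _ _; rewrite -h. Qed.
Let fs4 c c' : Delta (mul0 c c') = tlact (ra:=ra) (la:=la) mul0 c (Delta c').
Proof. by case: Hfs => _ _ _ h _; rewrite h. Qed.
Let pie c : mul0 c e = c. Proof. by case: Hfs => _ _ _ _ h; case: (h c). Qed.
Let pie' c : mul0 e c = c. Proof. by case: Hfs => _ _ _ _ h; case: (h c). Qed.
Let raaddl r : additive (ra ^~ r). Proof. exact: (rmaddl Hr r). Qed.
Let laaddr r : additive (la r). Proof. exact: (lmaddr Hl r). Qed.

Let P_l a x y : mul0 (la a x) y = la a (mul0 x y).
Proof. by rewrite /mul0 -(tlact_tmk (laaddr a) (fun m s => lr_comm a m s)) pil. Qed.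
Let P_r x y a : mul0 x (ra y a) = ra (mul0 x y) a.
Proof. by rewrite /mul0 -(tract_tmk (raaddl a) (fun r n => lr_comm r n a)) pir. Qed.
Let ph0_l a c : mul0 (ph0 a) c = la a c. Proof. by rewrite /ph0 P_l pie'. Qed.
Let ph0_r c a : mul0 c (ph0 a) = ra c a. Proof. by rewrite /ph0 fe P_r pie. Qed.
Let E1 : (fun s r => mul0 s (ph0 r)) = ra.
Proof. by apply: funext => s; apply: funext => r; rewrite ph0_r. Qed.
Let E2 : (fun r s => mul0 (ph0 r) s) = la.
Proof. by apply: funext => r; apply: funext => s; rewrite ph0_l. Qed.
Let P_addl y : additive (mul0 ^~ y). Proof. by move=> a b; rewrite /mul0 tmkDl piA. Qed.
Let P_addr x : additive (mul0 x). Proof. by move=> a b; rewrite /mul0 tmkDr piA. Qed.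

Let Rbal c'' : balanced ra la (fun a b => ra a (eps (mul0 b c''))).
Proof.
apply: mkbal => [a x y|b x y|a r b].
- by rewrite P_addl epsA (rmDr Hr).
- by rewrite (rmDl Hr).
by rewrite P_l epsl (rmA Hr).
Qed.

Let piE x y : mul0 x y = tlift (fun a b => ra a (eps (mul0 b y))) (Delta x).
Proof.
rewrite -{1}(cuR (mul0 x y)) fs3 tlift_tract //.
apply: mkbal => [a u v|b u v|a r b]; first by rewrite epsA (rmDr Hr).
  by rewrite (rmDl Hr).
by rewrite epsl (rmA Hr).
Qed.

Let P_assoc : associative mul0.
Proof.
move=> c c' c''; rewrite [RHS](piE (mul0 c c') c'') fs4 tlift_tlact //.
rewrite (tlift_ext (g := fun a b => mul0 c (ra a (eps (mul0 b c''))))); last first.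
  by move=> a b; rewrite P_r.
by rewrite -(tlift_comp (P_addr c)) -piE.
Qed.

Let ring_P : is_ring mul0 e.
Proof.
split; [exact: P_assoc | exact: pie' | exact: pie | | ].
  by move=> x y z; rewrite P_addl.
by move=> x y z; rewrite P_addr.
Qed.

Let rhom_ph0 : is_rhom (fun r s : A => r * s) 1 mul0 e ph0.
Proof.
split.
- by move=> a b; rewrite /ph0 (lmDl Hl).
- by move=> a b; rewrite ph0_l /ph0 (lmA Hl).
- by rewrite /ph0 (lm1 Hl).
Qed.

Lemma inv0 : InvL L0.
Proof.
split.
- exact: (Aring A).
- exact: ring_P.
- exact: rhom_ph0.
- by split.
- by [].
- by move=> s a /=; rewrite ph0_r.
- exact: (coring_retype E1 E2 Hcor).
- by move=> s s' /=; rewrite /rt0 fs4 (rt_tlact E1 E2).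
- by move=> s s' /=; rewrite /rt0 fs3 (rt_tract E1 E2).
- by [].
- by move=> a c /=; rewrite ph0_l.
- by move=> c a /=; rewrite ph0_r.
- by move=> x y /=; rewrite tmkDr.
- move=> s /=; rewrite tlift_tmk ?ph0_l ?(lm1 Hl) //.
  apply: mkbal => [r x y|c x y|r a c].
  + by rewrite P_addr.
  + by rewrite /ph0 (lmDl Hl) P_addl.
  by rewrite !ph0_l (lmA Hl).
- by move=> r c /=; rewrite ph0_l -tmk_mid /= mul1r.
Qed.

Lemma inv_all k : InvL (lvl k).
Proof.
elim: k => [|k IH]; first exact: inv0.
exact: (inv_next IH).
Qed.

Lemma phi1E c : lph (lvl 1) c = Delta c.
Proof.
have I0 := inv0.
transitivity (tlift (fun x y => tmk (ra:=ra) (la:=la) x y) (rt0 (Delta c))); last exact: (rt_id E1 E2).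
apply: tlift_ext => x y.
exact: (io_j (i_HS I0) (i_Hph I0) (i_HraR I0) (i_HraS I0) (i_Hdecg I0) x y).
Qed.

Lemma phi2E x : lph (lvl 2) x = tlift (fun c c' => tmk (ra := tract ra) (la := la) (tmk c e) c') x.
Proof.
have I0 := inv0; have I2 := inv_all 2.
have b : balanced ra la (fun c c' => tmk (ra := tract ra) (la := la) (tmk (ra:=ra) (la:=la) c e) c').
  apply: mkbal => [c u v|c' u v|c a c']; first exact: tmkDr.
    by rewrite tmkDl tmkDl.
  rewrite tmk_mid fe -(tract_tmk (raaddl a) (fun r n => lr_comm r n a)).
  by rewrite tmk_mid.
move: x; apply: tensor_ext.
- by case: (i_Hph I2).
- exact: tlift_additive b.
move=> c c'; rewrite (tlift_tmk b).
transitivity (tmk (ra := tract ra) (la := la)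
  (@io A C la (Cp 0) (Cp 1) mul0 ph0 (@raRk 0) ra (fun c => tmk (ra:=@raRk 0) (la:=la) (1 : A) c) c e) c').
  exact: (phT2_tmk I0).
congr tmk.
exact: (io_j (i_HS I0) (i_Hph I0) (i_HraR I0) (i_HraS I0) (i_Hdecg I0) c e).
Qed.

End Level0.

End Tower.

Theorem theorem3p2 (A : pzRingType) (C : zmodType) (la : A -> C -> C) (ra : C -> A -> C)
  (Delta : C -> tensor ra la) (eps : C -> A) :
  is_coring ( *%R) 1 Delta eps ->
  frobenius_coring ( *%R) 1 Delta eps ->
  forall (pi : tensor ra la -> C) (e : C), frobenius_system Delta pi e ->
  exists (mul : forall k, Cpow la ra k -> Cpow la ra k -> Cpow la ra k)
         (one : forall k, Cpow la ra k)
         (phi : forall k, Cpow la ra k -> Cpow la ra k.+1),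
  [/\ mul 0%N = ( *%R : A -> A -> A) /\ one 0%N = (1 : A),
      forall k, is_ring (mul k) (one k),
      forall k, is_rhom (mul k) (one k) (mul k.+1) (one k.+1) (phi k),
      [/\ forall a : A, phi 0%N a = la a e,
          forall c : C, phi 1%N c = Delta c
        & forall x : tensor ra la,
            phi 2%N x = tlift (fun c c' => tmk (ra := tract ra) (la := la) (tmk c e) c') x]
    & forall k,
        frobenius_extension (mul k) (one k) (mul k.+1) (one k.+1) (phi k) /\
        exists (Dk : Cpow la ra k.+1 ->
                     tensor (fun s r => mul k.+1 s (phi k r)) (fun r s => mul k.+1 (phi k r) s))
               (ek : Cpow la ra k.+1 -> Cpow la ra k),
          is_coring (mul k) (one k) Dk ek /\ frobenius_coring (mul k) (one k) Dk ek].
Proof.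
move=> Hcor _ pi e Hfs.
pose L := @lvl A C la ra Delta eps pi e.
have I := @inv_all A C la ra Delta eps pi e Hcor Hfs.
exists (fun k => lmR (L k)), (fun k => loR (L k)), (fun k => lph (L k)).
split.
- by split.
- by move=> k; exact: (i_HR (I k)).
- by move=> k; exact: (i_Hph (I k)).
- split.
  + by [].
  + exact: (phi1E Hcor Hfs).
  + exact: (phi2E Hcor Hfs).
- move=> k; split.
  + exact: (inv_frob_ext (I k)).
  + exists (lDS (L k)), (leS (L k)); split.
    * exact: (i_Hcor (I k)).
    * exact: (inv_frob_cor (I k)).
Qed.
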